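(* Under the standing setting and Assumptions (A1), (A2), (A3) described in the context: (i) for every $\delta>0$, $\displaystyle\lim_{\epsilon\to0}\inf\{t\ge0: |X(t)-\bar X^{\rm c}(t)|>\delta\}=+\infty$ almost surely; (ii) there exists a function $T:(0,\epsilon_0)\to\mathbb N$ with $\lim_{\epsilon\to0}T(\epsilon)=+\infty$ such that for every $\delta>0$, $$\lim_{\epsilon\to0}P\Big\{\sup_{0\le t\le T(\epsilon)}|X(t)-\bar X^{\rm c}(t)|>\delta\Big\}=0.$$
   Context: Setting. Let $(\Omega,\mathcal F,P)$ be a complete probability space, $\epsilon_0>0$ fixed and $\epsilon\in(0,\epsilon_0)$ a small parameter. Consider the discrete-time system $$X_{k+1}=X_k+\epsilon f(X_k,Y_{k+1}),\quad k=0,1,2,\dots,\qquad X_0=x\in\mathbb R^n \text{ (deterministic)},$$ where $\{Y_k\}$ is an $\mathbb R^m$-valued stochastic sequence with state space $S_Y\subset\mathbb R^m$, and $f:\mathbb R^n\times\mathbb R^m\to\mathbb R^n$. (A1) $f(x,y)$ is continuous in $(x,y)$; for each $x$, $y\mapsto f(x,y)$ is bounded; and $f$ is locally Lipschitz in $x$ uniformly in $y$: for every compact $D\subset\mathbb R^n$ there is $k_D$ with $|f(x_1,y)-f(x_2,y)|\le k_D|x_1-x_2|$ for all $x_1,x_2\in D$, $y\in S_Y$. (A2) $\{Y_k\}$ is ergodic with invariant distribution $\mu$, in the sense that for each $x$, $\bar f(x):=\int_{S_Y}f(x,y)\mu(dy)=\lim_{N\to\infty}\frac1{N+1}\sum_{k=0}^N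 f(x,Y_{k+1})$ almost surely. Average systems: the discrete average system $\bar X^{\rm d}_{k+1}=\bar X^{\rm d}_k+\epsilon\bar f(\bar X^{\rm d}_k)$, and the continuous average system $\frac{d}{dt}\bar X^{\rm c}(t)=\bar f(\bar X^{\rm c}(t))$, both with initial value $\bar X^{\rm d}_0=\bar X^{\rm c}(0)=X_0=x$. (A3) The continuous average system has a solution on $[0,\infty)$. Continuous-time versions: with $t_k=\epsilon k$, define the piecewise constant processes $X(t)=X_k$ and $\bar X^{\rm d}(t)=\bar X^{\rm d}_k$ for $t_k\le t<t_{k+1}$ (these depend on $\epsilon$). *)

(* Defs.v *)
From Stdlib Require Import Reals Lra Lia ZArith List.
Open Scope R_scope.

Definition vec (n : nat) := forall i : nat, (i < n)%nat -> R.

Definition vadd {n} (u v : vec n) : vec n := fun i H => u i H + v i H.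
Definition vscal {n} (c : R) (v : vec n) : vec n := fun i H => c * v i H.
Definition vsub {n} (u v : vec n) : vec n := fun i H => u i H - v i H.

Definition vget {n} (v : vec n) (i : nat) : R :=
  match lt_dec i n with left H => v i H | right _ => 0 end.

Fixpoint rsum (g : nat -> R) (k : nat) : R :=
  match k with O => 0 | S k' => rsum g k' + g k' end.

Definition vnorm {n} (v : vec n) : R := sqrt (rsum (fun i => (vget v i) ^ 2) n).

Fixpoint vsum {n} (g : nat -> vec n) (N : nat) : vec n :=
  match N with O => g O | S N' => vadd (vsum g N') (g N) end.

Definition vec_cv {n} (u : nat -> vec n) (l : vec n) : Prop :=
  forall e, 0 < e -> exists N, forall k, (N <= k)%nat -> vnorm (vsub (u k) l) < e.

Definition is_open {n} (U : vec n -> Prop) : Prop :=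
  forall x, U x -> exists r, 0 < r /\ forall y, vnorm (vsub y x) < r -> U y.

Definition is_compact {n} (D : vec n -> Prop) : Prop :=
  forall (I : Type) (U : I -> vec n -> Prop),
    (forall i, is_open (U i)) ->
    (forall x, D x -> exists i, U i x) ->
    exists l : list I, forall x, D x -> exists i, In i l /\ U i x.

Definition jointly_continuous {n m} (f : vec n -> vec m -> vec n) : Prop :=
  forall x y e, 0 < e -> exists d, 0 < d /\
    forall x' y', vnorm (vsub x' x) < d -> vnorm (vsub y' y) < d ->
      vnorm (vsub (f x' y') (f x y)) < e.

(** Xc solves dX/dt = g(X) on [0, +oo) (one-sided derivative at t = 0) *)
Definition ode_solution_nonneg {n} (g : vec n -> vec n) (Xc : R -> vec n) : Prop :=
  forall t, 0 <= t -> forall e, 0 < e -> exists d, 0 < d /\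
    forall h, h <> 0 -> Rabs h < d -> 0 <= t + h ->
      vnorm (vsub (vscal (/ h) (vsub (Xc (t + h)) (Xc t))) (g (Xc t))) < e.

Definition is_sigma_algebra {Omega : Type} (F : (Omega -> Prop) -> Prop) : Prop :=
  F (fun _ => True) /\
  (forall A, F A -> F (fun w => ~ A w)) /\
  (forall A : nat -> Omega -> Prop, (forall k, F (A k)) -> F (fun w => exists k, A k w)).

Definition is_probability {Omega : Type} (F : (Omega -> Prop) -> Prop)
    (P : (Omega -> Prop) -> R) : Prop :=
  is_sigma_algebra F /\
  (forall A, F A -> 0 <= P A) /\
  P (fun _ => True) = 1 /\
  (forall A : nat -> Omega -> Prop, (forall k, F (A k)) ->
     (forall i j w, i <> j -> A i w -> A j w -> False) ->
     infinite_sum (fun k => P (A k)) (P (fun w => exists k, A k w))).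

Definition is_complete {Omega : Type} (F : (Omega -> Prop) -> Prop)
    (P : (Omega -> Prop) -> R) : Prop :=
  forall A B, F B -> P B = 0 -> (forall w, A w -> B w) -> F A.

Definition almost_surely {Omega : Type} (F : (Omega -> Prop) -> Prop)
    (P : (Omega -> Prop) -> R) (Q : Omega -> Prop) : Prop :=
  exists N, F N /\ P N = 0 /\ forall w, ~ N w -> Q w.

Definition random_vec {Omega : Type} {m} (F : (Omega -> Prop) -> Prop)
    (Z : Omega -> vec m) : Prop :=
  forall U : vec m -> Prop, is_open U -> F (fun w => U (Z w)).

Fixpoint Xseq {n m} {Omega : Type} (f : vec n -> vec m -> vec n)
    (Y : nat -> Omega -> vec m) (eps : R) (x : vec n) (w : Omega) (k : nat) : vec n :=
  match k with
  | O => x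
  | S k' => let p := Xseq f Y eps x w k' in vadd p (vscal eps (f p (Y k w)))
  end.

(** piecewise constant interpolation: X(t) = X_k for eps k <= t < eps (k+1), t >= 0 *)
Definition Xcont {n m} {Omega : Type} (f : vec n -> vec m -> vec n)
    (Y : nat -> Omega -> vec m) (eps : R) (x : vec n) (w : Omega) (t : R) : vec n :=
  Xseq f Y eps x w (Z.to_nat (Int_part (t / eps))).

(** inf{ t >= 0 : dev t > delta } >= M   (inf of the empty set = +oo) *)
Definition exit_time_ge (dev : R -> R) (delta M : R) : Prop :=
  forall t, 0 <= t -> dev t > delta -> M <= t.

(* Main.v *)
Require Import Defs.
From Stdlib Require Import Reals Lra Lia ZArith List Classical ClassicalEpsilon FunctionalExtensionality PropExtensionality.
Open Scope R_scope.

Lemma Rdiv_le_0_compat a b : 0 <= a -> 0 < b -> 0 <= a / b.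
Proof. intros; unfold Rdiv; apply Rmult_le_pos; [auto| left; apply Rinv_0_lt_compat; auto]. Qed.

Lemma rsum_ext (g h : nat -> R) k : (forall i, (i < k)%nat -> g i = h i) -> rsum g k = rsum h k.
Proof. induction k; simpl; intros H; auto. rewrite IHk by (intros; apply H; lia). rewrite H by lia. auto. Qed.

Lemma rsum_plus (g h : nat -> R) k : rsum (fun i => g i + h i) k = rsum g k + rsum h k.
Proof. induction k; simpl; [lra|]. rewrite IHk; lra. Qed.

Lemma rsum_minus (g h : nat -> R) k : rsum (fun i => g i - h i) k = rsum g k - rsum h k.
Proof. induction k; simpl; [lra|]. rewrite IHk; lra. Qed.

Lemma rsum_scal (c : R) (g : nat -> R) k : rsum (fun i => c * g i) k = c * rsum g k.
Proof. induction k; simpl; [lra|]. rewrite IHk; lra. Qed.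

Lemma rsum_const (c : R) k : rsum (fun _ => c) k = INR k * c.
Proof. induction k; simpl rsum; [simpl; lra|]. rewrite IHk, S_INR; lra. Qed.

Lemma rsum_le (g h : nat -> R) k : (forall i, (i < k)%nat -> g i <= h i) -> rsum g k <= rsum h k.
Proof. induction k; simpl; intros H; [lra|]. assert (H1 := H k ltac:(lia)). assert (rsum g k <= rsum h k) by (apply IHk; intros; apply H; lia). lra. Qed.

Lemma rsum_nonneg (g : nat -> R) k : (forall i, (i < k)%nat -> 0 <= g i) -> 0 <= rsum g k.
Proof. intros H. replace 0 with (rsum (fun _ => 0) k). apply rsum_le; auto. rewrite rsum_const; lra. Qed.

Lemma rsum_abs (g : nat -> R) k : Rabs (rsum g k) <= rsum (fun i => Rabs (g i)) k.
Proof. induction k; simpl. rewrite Rabs_R0; lra. eapply Rle_trans. apply Rabs_triang. lra. Qed.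

Lemma rsum_term_le (g : nat -> R) k i : (forall j, (j < k)%nat -> 0 <= g j) -> (i < k)%nat -> g i <= rsum g k.
Proof.
  induction k; intros H Hi; [lia|]. simpl.
  assert (0 <= rsum g k) by (apply rsum_nonneg; intros; apply H; lia).
  destruct (Nat.eq_dec i k). subst. lra.
  assert (g i <= rsum g k) by (apply IHk; [intros; apply H; lia| lia]).
  assert (0 <= g k) by (apply H; lia). lra.
Qed.

Lemma rsum_swap (a : nat -> nat -> R) k l :
  rsum (fun i => rsum (fun j => a i j) l) k = rsum (fun j => rsum (fun i => a i j) k) l.
Proof.
  induction k; simpl.
  - transitivity (rsum (fun _ => 0) l). rewrite rsum_const; lra. apply rsum_ext. auto.
  - rewrite IHk. rewrite <- rsum_plus. reflexivity.
Qed.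

Lemma vget_vadd {n} (u v : vec n) i : vget (vadd u v) i = vget u i + vget v i.
Proof. unfold vget, vadd. destruct (lt_dec i n); lra. Qed.
Lemma vget_vsub {n} (u v : vec n) i : vget (vsub u v) i = vget u i - vget v i.
Proof. unfold vget, vsub. destruct (lt_dec i n); lra. Qed.
Lemma vget_vscal {n} c (v : vec n) i : vget (vscal c v) i = c * vget v i.
Proof. unfold vget, vscal. destruct (lt_dec i n); lra. Qed.

Lemma vget_vsum {n} (g : nat -> vec n) N i : vget (vsum g N) i = rsum (fun k => vget (g k) i) (S N).
Proof. induction N; simpl. lra. rewrite vget_vadd, IHN. simpl. lra. Qed.

Definition mkvec (n : nat) (g : nat -> R) : vec n := fun i _ => g i.
Lemma vget_mkvec n g i : (i < n)%nat -> vget (mkvec n g) i = g i.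
Proof. intros H. unfold vget, mkvec. destruct (lt_dec i n); [auto|lia]. Qed.

Definition N1 (n : nat) (g : nat -> R) := rsum (fun i => Rabs (g i)) n.
Definition E2 (n : nat) (g : nat -> R) := sqrt (rsum (fun i => g i ^ 2) n).

Lemma vnorm_E2 {n} (v : vec n) : vnorm v = E2 n (vget v).
Proof. reflexivity. Qed.

Lemma N1_ext n g h : (forall i, (i < n)%nat -> g i = h i) -> N1 n g = N1 n h.
Proof. intros H; unfold N1; apply rsum_ext; intros; rewrite H; auto. Qed.
Lemma E2_ext n g h : (forall i, (i < n)%nat -> g i = h i) -> E2 n g = E2 n h.
Proof. intros H; unfold E2; f_equal; apply rsum_ext; intros; rewrite H; auto. Qed.

Lemma N1_nonneg n g : 0 <= N1 n g.
Proof. apply rsum_nonneg; intros; apply Rabs_pos. Qed.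
Lemma E2_nonneg n g : 0 <= E2 n g.
Proof. apply sqrt_pos. Qed.

Lemma N1_triang n g h : N1 n (fun i => g i + h i) <= N1 n g + N1 n h.
Proof. unfold N1. rewrite <- rsum_plus. apply rsum_le; intros; apply Rabs_triang. Qed.

Lemma N1_scal n c g : N1 n (fun i => c * g i) = Rabs c * N1 n g.
Proof. unfold N1. rewrite <- rsum_scal. apply rsum_ext; intros; apply Rabs_mult. Qed.

Lemma N1_opp n g : N1 n (fun i => - g i) = N1 n g.
Proof. unfold N1. apply rsum_ext; intros; apply Rabs_Ropp. Qed.

Lemma N1_sub_sym n g h : N1 n (fun i => g i - h i) = N1 n (fun i => h i - g i).
Proof. unfold N1. apply rsum_ext; intros; apply Rabs_minus_sym. Qed.

Lemma N1_triang_sub n g h k : N1 n (fun i => g i - k i) <= N1 n (fun i => g i - h i) + N1 n (fun i => h i - k i).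
Proof. eapply Rle_trans; [|apply N1_triang]. right. apply N1_ext. intros; lra. Qed.

Lemma N1_coord n g i : (i < n)%nat -> Rabs (g i) <= N1 n g.
Proof. intros; unfold N1. apply (rsum_term_le (fun i => Rabs (g i))); auto. intros; apply Rabs_pos. Qed.

Lemma N1_rsum n (a : nat -> nat -> R) k : N1 n (fun i => rsum (fun j => a j i) k) <= rsum (fun j => N1 n (a j)) k.
Proof.
  unfold N1. eapply Rle_trans. apply rsum_le. intros. apply rsum_abs.
  rewrite rsum_swap. apply Rle_refl.
Qed.

Lemma sq_rsum_le n g : rsum (fun i => g i ^ 2) n <= (N1 n g) ^ 2.
Proof.
  unfold N1. induction n; simpl; [lra|].
  assert (0 <= rsum (fun i => Rabs (g i)) n) by (apply rsum_nonneg; intros; apply Rabs_pos).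
  assert (g n ^2 = Rabs (g n) ^ 2) by (rewrite <- Rsqr_pow2, <- Rsqr_pow2; apply Rsqr_abs).
  assert (0 <= Rabs (g n)) by apply Rabs_pos. simpl in *. nra.
Qed.

Lemma E2_le_N1 n g : E2 n g <= N1 n g.
Proof.
  unfold E2. rewrite <- (sqrt_pow2 (N1 n g)) by apply N1_nonneg. apply sqrt_le_1_alt. apply sq_rsum_le.
Qed.

Lemma coord_le_E2 n g i : (i < n)%nat -> Rabs (g i) <= E2 n g.
Proof.
  intros H. unfold E2. rewrite <- sqrt_Rsqr_abs. apply sqrt_le_1_alt.
  rewrite Rsqr_pow2. apply (rsum_term_le (fun i => g i ^ 2)); auto. intros; apply pow2_ge_0.
Qed.

Lemma N1_le_E2 n g : N1 n g <= INR n * E2 n g.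
Proof.
  unfold N1. rewrite <- rsum_const. apply rsum_le. intros. apply coord_le_E2; auto.
Qed.

Lemma E2_scal n c g : E2 n (fun i => c * g i) = Rabs c * E2 n g.
Proof.
  unfold E2. rewrite <- sqrt_Rsqr_abs, <- sqrt_mult_alt by apply Rle_0_sqr.
  f_equal. rewrite <- rsum_scal. apply rsum_ext. intros. rewrite Rsqr_pow2. ring.
Qed.

Lemma CS n g h : rsum (fun i => g i * h i) n <= E2 n g * E2 n h.
Proof.
  set (A := rsum (fun i => g i ^ 2) n). set (B := rsum (fun i => h i ^ 2) n).
  set (C := rsum (fun i => g i * h i) n).
  assert (HA : 0 <= A) by (apply rsum_nonneg; intros; apply pow2_ge_0).
  assert (HB : 0 <= B) by (apply rsum_nonneg; intros; apply pow2_ge_0).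
  assert (Hq : forall l, 0 <= A + 2 * l * C + l ^ 2 * B).
  { intros l. replace (A + 2 * l * C + l ^ 2 * B) with (rsum (fun i => (g i + l * h i) ^ 2) n).
    apply rsum_nonneg; intros; apply pow2_ge_0.
    unfold A, B, C. rewrite <- !rsum_scal, <- !rsum_plus. apply rsum_ext. intros; ring. }
  assert (HC2 : C ^ 2 <= A * B).
  { destruct (Req_dec B 0) as [HB0|HB0].
    - assert (forall l, 0 <= A + 2 * l * C) by (intros l; specialize (Hq l); rewrite HB0 in Hq; lra).
      destruct (Req_dec C 0). rewrite H0; nra.
      specialize (H (- (A + 1) / (2 * C))). field_simplify in H; auto. lra.
    - specialize (Hq (- C / B)). assert (0 < B) by lra.
      assert (0 <= A - C ^ 2 / B). { replace (A - C^2/B) with (A + 2 * (- C / B) * C + (- C / B) ^ 2 * B) by (field; lra). auto. }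
      assert (0 <= (A - C^2/B) * B) by nra. replace ((A - C^2/B) * B) with (A * B - C^2) in H1 by (field; lra). lra. }
  unfold E2. fold A B. rewrite <- sqrt_mult by auto.
  destruct (Rle_dec C 0). assert (0 <= sqrt (A * B)) by apply sqrt_pos. lra.
  rewrite <- (sqrt_pow2 C) by lra. apply sqrt_le_1_alt; nra.
Qed.

Lemma E2_triang n g h : E2 n (fun i => g i + h i) <= E2 n g + E2 n h.
Proof.
  assert (H1 := CS n g h).
  assert (Hg := E2_nonneg n g). assert (Hh := E2_nonneg n h).
  assert (Hs : E2 n (fun i => g i + h i) ^ 2 <= (E2 n g + E2 n h) ^ 2).
  { unfold E2 at 1. rewrite pow2_sqrt by (apply rsum_nonneg; intros; apply pow2_ge_0).
    replace ((E2 n g + E2 n h) ^ 2) with (E2 n g ^ 2 + E2 n h ^ 2 + 2 * (E2 n g * E2 n h)) by ring.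
    unfold E2 at 1 2; rewrite !pow2_sqrt by (apply rsum_nonneg; intros; apply pow2_ge_0).
    replace (rsum (fun i => (g i + h i) ^ 2) n) with
      (rsum (fun i => g i ^ 2) n + rsum (fun i => h i ^ 2) n + 2 * rsum (fun i => g i * h i) n).
    lra. rewrite <- rsum_scal, <- !rsum_plus. apply rsum_ext; intros; ring. }
  assert (0 <= E2 n (fun i => g i + h i)) by apply E2_nonneg.
  nra.
Qed.

Lemma pred_ext {Omega : Type} (A B : Omega -> Prop) : (forall w, A w <-> B w) -> A = B.
Proof. intros H. apply functional_extensionality. intros w. apply propositional_extensionality. auto. Qed.

Lemma F_ext {Omega} (F : (Omega -> Prop) -> Prop) A B : F A -> (forall w, A w <-> B w) -> F B.
Proof. intros HA H. rewrite <- (pred_ext A B H). auto. Qed.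

Lemma F_True {Omega} (F : (Omega -> Prop) -> Prop) : is_sigma_algebra F -> F (fun _ => True).
Proof. intros [H _]; auto. Qed.
Lemma F_compl {Omega} (F : (Omega -> Prop) -> Prop) A : is_sigma_algebra F -> F A -> F (fun w => ~ A w).
Proof. intros [_ [H _]]; auto. Qed.
Lemma F_union {Omega} (F : (Omega -> Prop) -> Prop) (A : nat -> Omega -> Prop) :
  is_sigma_algebra F -> (forall k, F (A k)) -> F (fun w => exists k, A k w).
Proof. intros [_ [_ H]]; auto. Qed.
Lemma F_False {Omega} (F : (Omega -> Prop) -> Prop) : is_sigma_algebra F -> F (fun _ => False).
Proof. intros HF. apply (F_ext F (fun w => ~ True)). apply F_compl; auto. apply F_True; auto. simpl. tauto. Qed.
Lemma F_or {Omega} (F : (Omega -> Prop) -> Prop) A B : is_sigma_algebra F -> F A -> F B -> F (fun w => A w \/ B w).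
Proof.
  intros HF HA HB. eapply F_ext. apply (F_union F (fun k => match k with O => A | _ => B end)); auto.
  intros [|k]; auto. intros w; split. intros [[|k] H]; auto. intros [H|H]. exists O; auto. exists 1%nat; auto.
Qed.
Lemma F_and {Omega} (F : (Omega -> Prop) -> Prop) A B : is_sigma_algebra F -> F A -> F B -> F (fun w => A w /\ B w).
Proof.
  intros HF HA HB. apply (F_ext F (fun w => ~ (~ A w \/ ~ B w))). apply F_compl; auto. apply F_or; auto; apply F_compl; auto.
  intros w; simpl. tauto.
Qed.
Lemma F_inter {Omega} (F : (Omega -> Prop) -> Prop) (A : nat -> Omega -> Prop) :
  is_sigma_algebra F -> (forall k, F (A k)) -> F (fun w => forall k, A k w).
Proof.
  intros HF HA. apply (F_ext F (fun w => ~ exists k, ~ A k w)). apply F_compl; auto. apply F_union; auto. intros k; apply F_compl; auto.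
  intros w; simpl. split. intros H k. apply NNPP. intros H'. apply H. exists k; auto.
  intros H [k Hk]. auto.
Qed.
Lemma F_const {Omega} (F : (Omega -> Prop) -> Prop) (Q : Prop) : is_sigma_algebra F -> F (fun _ => Q).
Proof.
  intros HF. destruct (classic Q). apply (F_ext F (fun _ => True)). apply F_True; auto. simpl; tauto.
  apply (F_ext F (fun _ => False)). apply F_False; auto. simpl; tauto.
Qed.
Lemma F_cond {Omega} (F : (Omega -> Prop) -> Prop) (Q : Prop) A : is_sigma_algebra F -> (Q -> F A) -> F (fun w => Q /\ A w).
Proof.
  intros HF H. destruct (classic Q). apply (F_ext F A). apply H; auto. simpl; tauto.
  apply (F_ext F (fun _ => False)). apply F_False; auto. simpl; tauto.
Qed.

Lemma sum_const c n : sum_f_R0 (fun _ => c) n = INR (S n) * c.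
Proof. induction n; simpl sum_f_R0. simpl; lra. rewrite IHn. rewrite (S_INR (S n)). lra. Qed.

Lemma infinite_sum_ev0 (s : nat -> R) : (forall k, (2 <= k)%nat -> s k = 0) -> infinite_sum s (s 0%nat + s 1%nat).
Proof.
  intros H e He. exists 1%nat. intros k Hk.
  assert (Hk' : forall k, sum_f_R0 s (S k) = s 0%nat + s 1%nat).
  { intro j; induction j. simpl. lra. change (sum_f_R0 s (S (S j))) with (sum_f_R0 s (S j) + s (S (S j))). rewrite H by lia. rewrite IHj. lra. }
  assert (sum_f_R0 s k = s 0%nat + s 1%nat). { destruct k. lia. apply Hk'. }
  rewrite H0. unfold Rdist. rewrite Rminus_diag, Rabs_R0. lra.
Qed.

Lemma infinite_sum_0 (s : nat -> R) : (forall k, s k = 0) -> infinite_sum s 0.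
Proof.
  intros H e He. exists 0%nat. intros k _.
  assert (sum_f_R0 s k = 0). { induction k; simpl; rewrite H; try rewrite IHk; lra. }
  rewrite H0. unfold Rdist. rewrite Rminus_diag, Rabs_R0. lra.
Qed.


Lemma P_False {Omega} F (P : (Omega -> Prop) -> R) : is_probability F P -> P (fun _ => False) = 0.
Proof.
  intros [HF [Hpos [H1 Hadd]]].
  assert (H := Hadd (fun _ => fun _ => False) (fun _ => F_False F HF) ltac:(auto)).
  assert (E : (fun w : Omega => exists k : nat, False) = (fun _ => False)).
  { apply pred_ext. intros w; split; [intros [_ []]|tauto]. }
  cbv beta in H. rewrite E in H. set (c := P (fun _ => False)) in *.
  assert (Hc : 0 <= c) by (apply Hpos; apply F_False; auto).
  destruct (Req_dec c 0); auto. exfalso.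
  destruct (H (c/2) ltac:(lra)) as [N HN]. specialize (HN (S N) ltac:(lia)).
  rewrite sum_const in HN. unfold Rdist in HN. rewrite Rabs_right in HN.
  - rewrite !S_INR in HN. assert (0 <= INR N) by apply pos_INR. nra.
  - rewrite !S_INR. assert (0 <= INR N) by apply pos_INR. nra.
Qed.

Lemma P_nonneg {Omega} F (P : (Omega -> Prop) -> R) A : is_probability F P -> F A -> 0 <= P A.
Proof. intros [_ [H _]]; auto. Qed.

Lemma P_add2 {Omega} F (P : (Omega -> Prop) -> R) A B : is_probability F P -> F A -> F B ->
  (forall w, A w -> B w -> False) -> P (fun w => A w \/ B w) = P A + P B.
Proof.
  intros HP HA HB Hd. pose proof HP as [HF [Hpos [H1 Hadd]]].
  set (S := fun k : nat => match k with O => A | 1%nat => B | _ => fun _ : Omega => False end).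
  assert (HS : forall k, F (S k)). { intros [|[|k]]; simpl; auto. apply F_False; auto. }
  assert (Hdis : forall i j w, i <> j -> S i w -> S j w -> False).
  { intros [|[|i]] [|[|j]] w Hij; simpl; try tauto; try lia. intros; eauto. intros; eauto. }
  specialize (Hadd S HS Hdis).
  assert (Hs2 := infinite_sum_ev0 (fun k => P (S k))).
  assert (E1 : (fun w => exists k, S k w) = (fun w => A w \/ B w)).
  { apply pred_ext. intros w; split. intros [[|[|k]] Hk]; simpl in Hk; tauto.
    intros [H|H]. exists O; auto. exists 1%nat; auto. }
  rewrite E1 in Hadd. eapply uniqueness_sum. apply Hadd. apply Hs2.
  intros [|[|k]] Hk; try lia. simpl. apply (P_False F); auto.
Qed.

Lemma P_mono {Omega} F (P : (Omega -> Prop) -> R) A B : is_probability F P -> F A -> F B ->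
  (forall w, A w -> B w) -> P A <= P B.
Proof.
  intros HP HA HB H. pose proof HP as [HF _].
  assert (HC : F (fun w => B w /\ ~ A w)) by (apply F_and; auto; apply F_compl; auto).
  assert (E : B = (fun w => A w \/ (B w /\ ~ A w))).
  { apply pred_ext. intros w; split; intros. destruct (classic (A w)); tauto. destruct H0; auto; tauto. }
  rewrite E. rewrite (P_add2 F P); auto. assert (0 <= P (fun w => B w /\ ~ A w)) by (apply (P_nonneg F); auto). lra.
  intros w ? [? ?]; auto.
Qed.

Lemma P_compl {Omega} F (P : (Omega -> Prop) -> R) A : is_probability F P -> F A -> P (fun w => ~ A w) = 1 - P A.
Proof.
  intros HP HA. pose proof HP as [HF [_ [H1 _]]].
  assert (E : (fun _ : Omega => True) = (fun w => A w \/ ~ A w)) by (apply pred_ext; intros; tauto).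
  rewrite E in H1. rewrite (P_add2 F P) in H1; auto. lra. apply F_compl; auto.
Qed.

Lemma P_le1 {Omega} F (P : (Omega -> Prop) -> R) A : is_probability F P -> F A -> P A <= 1.
Proof. intros HP HA. pose proof HP as [HF [_ [H1 _]]]. rewrite <- H1. apply (P_mono F); auto. apply F_True; auto. Qed.

Lemma least_witness (Q : nat -> Prop) k : Q k -> exists k', Q k' /\ forall j, (j < k')%nat -> ~ Q j.
Proof.
  revert Q. induction k as [k IH] using (well_founded_induction lt_wf). intros Q Hk.
  destruct (classic (exists j, (j < k)%nat /\ Q j)) as [[j [Hj HQ]]|Hn].
  - apply (IH j Hj Q HQ).
  - exists k. split; auto. intros j Hj HQ. apply Hn. eauto.
Qed.

Lemma P_null_union {Omega} F (P : (Omega -> Prop) -> R) (N : nat -> Omega -> Prop) : is_probability F P ->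
  (forall k, F (N k)) -> (forall k, P (N k) = 0) -> F (fun w => exists k, N k w) /\ P (fun w => exists k, N k w) = 0.
Proof.
  intros HP HN H0. pose proof HP as [HF [Hpos [H1 Hadd]]].
  split. apply F_union; auto.
  set (D := fun k w => N k w /\ ~ exists j, (j < k)%nat /\ N j w).
  assert (HD : forall k, F (D k)).
  { intros k. apply F_and; auto. apply F_compl; auto. apply F_union; auto. intros j. apply F_cond; auto. }
  assert (Hdis : forall i j w, i <> j -> D i w -> D j w -> False).
  { intros i j w Hij [Hi Hi'] [Hj Hj']. destruct (Nat.lt_gt_cases i j) as [[Hl|Hl] _]; auto.
    apply Hj'; eauto. apply Hi'; eauto. }
  specialize (Hadd D HD Hdis).
  assert (E : (fun w => exists k, D k w) = (fun w => exists k, N k w)).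
  { apply pred_ext. intros w; split. intros [k [Hk _]]; eauto.
    intros [k Hk]. destruct (least_witness (fun k => N k w) k Hk) as [k' [Hk' Hl]].
    exists k'. split; auto. intros [j [Hj Hj']]. eapply Hl; eauto. }
  rewrite E in Hadd. eapply uniqueness_sum. apply Hadd. apply infinite_sum_0.
  intros k. apply Rle_antisym. rewrite <- (H0 k). apply (P_mono F); auto. intros w [? ?]; auto.
  apply Hpos; auto.
Qed.

Lemma as_forall {Omega} F (P : (Omega -> Prop) -> R) (Q : nat -> Omega -> Prop) : is_probability F P ->
  (forall k, almost_surely F P (Q k)) -> almost_surely F P (fun w => forall k, Q k w).
Proof.
  intros HP H. destruct (choice (fun k N => F N /\ P N = 0 /\ forall w, ~ N w -> Q k w) H) as [N HN].
  destruct (P_null_union F P N HP) as [HU HU0]. intros k; apply HN. intros k; apply HN.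
  exists (fun w => exists k, N k w). split; auto. split; auto.
  intros w Hw k. apply HN. intros Hk. apply Hw; eauto.
Qed.

Lemma as_nonempty {Omega} F (P : (Omega -> Prop) -> R) (Q : Omega -> Prop) : is_probability F P ->
  almost_surely F P Q -> exists w, Q w.
Proof.
  intros HP [N [HN [HN0 HQ]]]. destruct (classic (exists w, ~ N w)) as [[w Hw]|Hn]. eauto.
  exfalso. pose proof HP as [HF [_ [H1 _]]].
  assert (P (fun _ => True) <= P N). apply (P_mono F); auto. apply F_True; auto.
  intros w _. apply NNPP. intros H. apply Hn; eauto. lra.
Qed.

Lemma P_incr {Omega} F (P : (Omega -> Prop) -> R) (W : nat -> Omega -> Prop) : is_probability F P ->
  (forall j, F (W j)) -> (forall j w, W j w -> W (S j) w) ->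
  almost_surely F P (fun w => exists j, W j w) ->
  forall eta, 0 < eta -> exists j, forall j', (j <= j')%nat -> P (fun w => ~ W j' w) < eta.
Proof.
  intros HP HW Hinc Has eta Heta. pose proof HP as [HF [Hpos [H1 Hadd]]].
  assert (Hmon : forall j j' w, (j <= j')%nat -> W j w -> W j' w).
  { intros j j' w Hj. induction Hj; auto. }
  set (D := fun k w => match k with O => W O w | S k' => W (S k') w /\ ~ W k' w end).
  assert (HD : forall k, F (D k)). { intros kk. destruct kk as [|k]. unfold D; auto. unfold D. apply (F_and F (W (S k)) (fun w => ~ W k w)); auto. apply F_compl; auto. }
  assert (Hdis : forall i j w, i <> j -> D i w -> D j w -> False).
  { assert (Hlt : forall i j w, (i < j)%nat -> D i w -> D j w -> False).
    { intros i j w Hij Hi Hj. destruct j as [|j]; [lia|]. destruct Hj as [_ Hj]. apply Hj.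
      destruct i as [|i]; simpl in Hi.
      - apply (Hmon O); auto; lia.
      - apply (Hmon (S i)); [lia|tauto]. }
    intros i j w Hij Hi Hj. destruct (Nat.lt_gt_cases i j) as [[Hl|Hl] _]; auto; eauto. }
  specialize (Hadd D HD Hdis).
  assert (Hpart : forall j, sum_f_R0 (fun k => P (D k)) j = P (W j)).
  { induction j. reflexivity. simpl sum_f_R0. rewrite IHj.
    assert (E : W (S j) = (fun w => W j w \/ D (S j) w)).
    { apply pred_ext. intros w; simpl; split. intros; destruct (classic (W j w)); tauto. intros [H|H]; auto. tauto. }
    rewrite E. rewrite (P_add2 F P); auto. intros w ? [? ?]; auto. }
  assert (HU : F (fun w => exists k, D k w)) by (apply F_union; auto).
  assert (HU1 : P (fun w => exists k, D k w) = 1).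
  { apply Rle_antisym. apply (P_le1 F); auto.
    destruct Has as [N [HN [HN0 HNQ]]].
    assert (HcN := P_compl F P N HP HN). rewrite HN0 in HcN.
    replace 1 with (1 - 0) by lra. rewrite <- HcN. apply (P_mono F); auto. apply F_compl; auto.
    intros w Hw. destruct (HNQ w Hw) as [j Hj]. destruct (least_witness (fun j => W j w) j Hj) as [k [Hk Hl]].
    exists k. destruct k as [|k]; unfold D; [auto| split; [auto| apply Hl; lia]]. }
  rewrite HU1 in Hadd. destruct (Hadd eta Heta) as [N0 HN0]. exists N0. intros j' Hj'.
  specialize (HN0 j' Hj'). rewrite Hpart in HN0. unfold Rdist in HN0.
  rewrite (P_compl F P); auto. apply Rabs_def2 in HN0. lra.
Qed.

Lemma IZR_split (t : Z) : IZR t = INR (Z.to_nat t) - INR (Z.to_nat (- t)).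
Proof.
  rewrite !INR_IZR_INZ. destruct (Z_le_gt_dec 0 t).
  - rewrite Z2Nat.id by lia. replace (Z.to_nat (- t)) with 0%nat by lia. simpl. lra.
  - rewrite (Z2Nat.id (- t)) by lia. replace (Z.to_nat t) with 0%nat by lia. simpl.
    rewrite opp_IZR. lra.
Qed.

Lemma Rabs_sub_triang a b : Rabs (a - b) <= Rabs a + Rabs b.
Proof. unfold Rabs; repeat destruct Rcase_abs; lra. Qed.

(** countable unions indexed by finitely-supported nat functions *)
Definition zcons (a : nat) (z : nat -> nat) : nat -> nat := fun i => match i with O => a | S i' => z i' end.

Lemma union_fun {Omega} (F : (Omega -> Prop) -> Prop) (HF : is_sigma_algebra F) (d : nat) :
  forall (Sf : (nat -> nat) -> Omega -> Prop), (forall z, F (Sf z)) ->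
  (forall z z' w, (forall i, (i < d)%nat -> z i = z' i) -> Sf z w -> Sf z' w) ->
  F (fun w => exists z, Sf z w).
Proof.
  induction d; intros Sf HS Hd.
  - apply (F_ext F (Sf (fun _ => O))); auto. intros w; split. eauto.
    intros [z Hz]. eapply Hd; [|eauto]. intros; lia.
  - apply (F_ext F (fun w => exists a, exists z, Sf (zcons a z) w)).
    + apply F_union; auto. intros a. apply (IHd (fun z => Sf (zcons a z))); auto.
      intros z z' w Hzz'. apply Hd. intros [|i] Hi; simpl; auto. apply Hzz'. lia.
    + intros w; split. intros [a [z Hz]]; eauto.
      intros [z Hz]. exists (z O), (fun i => z (Datatypes.S i)). eapply Hd; [|eauto].
      intros [|i] _; reflexivity.
Qed.

Lemma finite_min (g : nat -> R) n : (forall i, (i < n)%nat -> 0 < g i) -> exists r, 0 < r /\ forall i, (i < n)%nat -> r <= g i.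
Proof.
  induction n; intros H. exists 1; split; [lra| intros; lia].
  destruct IHn as [r [Hr Hr']]. intros; apply H; lia.
  exists (Rmin r (g n)). split. apply Rmin_pos; auto; apply H; lia.
  intros i Hi. destruct (Nat.eq_dec i n). subst. apply Rmin_r.
  eapply Rle_trans. apply Rmin_l. apply Hr'; lia.
Qed.

Definition Box (n : nat) (q : nat -> R) (r : R) (a : vec n) : Prop :=
  forall i, (i < n)%nat -> Rabs (vget a i - q i) < r.

Lemma Box_open n q r : is_open (Box n q r).
Proof.
  intros x Hx. destruct (finite_min (fun i => r - Rabs (vget x i - q i)) n) as [r' [Hr' Hr'']].
  intros i Hi; specialize (Hx i Hi); lra.
  exists r'. split; auto. intros y Hy i Hi.
  assert (H1 := coord_le_E2 n (vget (vsub y x)) i Hi). rewrite <- vnorm_E2, vget_vsub in H1.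
  specialize (Hr'' i Hi). simpl in Hr''.
  replace (vget y i - q i) with ((vget y i - vget x i) + (vget x i - q i)) by ring.
  eapply Rle_lt_trans. apply Rabs_triang. lra.
Qed.

Lemma Box_ext n q q' r a : (forall i, (i < n)%nat -> q i = q' i) -> Box n q r a -> Box n q' r a.
Proof. intros H Hb i Hi. rewrite <- H; auto. Qed.

Lemma rv_const {Omega} F {n} (c : vec n) : is_sigma_algebra F -> @random_vec Omega n F (fun _ => c).
Proof. intros HF U _. apply F_const; auto. Qed.

Lemma vnorm_vsub_N1 {n} (u v : vec n) : vnorm (vsub u v) <= N1 n (fun i => vget u i - vget v i).
Proof. rewrite vnorm_E2. eapply Rle_trans. apply E2_le_N1. right. apply N1_ext. intros; apply vget_vsub. Qed.

Lemma grid_point (a rho : R) : 0 < rho -> exists t : Z, Rabs (a - IZR t * rho) < rho.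
Proof.
  intros Hr. exists (Int_part (a / rho)). destruct (base_Int_part (a / rho)) as [H1 H2].
  assert (IZR (Int_part (a / rho)) * rho <= a). { apply (Rmult_le_compat_r rho) in H1; [|lra]. field_simplify in H1; lra. }
  assert (a < IZR (Int_part (a / rho)) * rho + rho).
  { assert (a / rho < IZR (Int_part (a / rho)) + 1) by lra. apply (Rmult_lt_compat_r rho) in H0; auto.
    field_simplify in H0; lra. }
  rewrite Rabs_right; lra.
Qed.

Lemma rv_comp {Omega} (F : (Omega -> Prop) -> Prop) (HF : is_sigma_algebra F) n m
  (A : Omega -> vec n) (B : Omega -> vec m) (g : vec n -> vec m -> vec n) :
  random_vec F A -> random_vec F B -> jointly_continuous g -> random_vec F (fun w => g (A w) (B w)).
Proof.
  intros HA HB Hg U HU.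
  set (rho := fun p : nat => / INR (S p)).
  set (qq := fun (p : nat) (z1 z2 : nat -> nat) (i : nat) => (INR (z1 i) - INR (z2 i)) * rho p).
  set (Good := fun p a1 a2 b1 b2 => forall a b, Box n (qq p a1 a2) (rho p) a -> Box m (qq p b1 b2) (rho p) b -> U (g a b)).
  apply (F_ext F (fun w => exists p, exists a1, exists a2, exists b1, exists b2,
     Good p a1 a2 b1 b2 /\ (Box n (qq p a1 a2) (rho p) (A w) /\ Box m (qq p b1 b2) (rho p) (B w)))).
  - apply F_union; auto. intros p.
    apply (union_fun F HF n); [intros a1 | ].
    apply (union_fun F HF n); [intros a2 | ].
    apply (union_fun F HF m); [intros b1 | ].
    apply (union_fun F HF m); [intros b2 | ].
    + apply F_cond; auto. intros _. apply F_and; auto. apply HA, Box_open. apply HB, Box_open.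
    + intros z z' w Hz [Hg' [H1 H2]]. split; [|split; auto].
      * intros a b Ha Hb. apply Hg'; auto. eapply Box_ext; [|eauto]. intros i Hi; unfold qq; rewrite Hz; auto.
      * eapply Box_ext; [|eauto]. intros i Hi; unfold qq; rewrite Hz; auto.
    + intros z z' w Hz [b2 [Hg' [H1 H2]]]. exists b2. split; [|split; auto].
      * intros a b Ha Hb. apply Hg'; auto. eapply Box_ext; [|eauto]. intros i Hi; unfold qq; rewrite Hz; auto.
      * eapply Box_ext; [|eauto]. intros i Hi; unfold qq; rewrite Hz; auto.
    + intros z z' w Hz [b1 [b2 [Hg' [H1 H2]]]]. exists b1, b2. split; [|split; auto].
      * intros a b Ha Hb. apply Hg'; auto. eapply Box_ext; [|eauto]. intros i Hi; unfold qq; rewrite Hz; auto.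
      * eapply Box_ext; [|eauto]. intros i Hi; unfold qq; rewrite Hz; auto.
    + intros z z' w Hz [a2 [b1 [b2 [Hg' [H1 H2]]]]]. exists a2, b1, b2. split; [|split; auto].
      * intros a b Ha Hb. apply Hg'; auto. eapply Box_ext; [|eauto]. intros i Hi; unfold qq; rewrite Hz; auto.
      * eapply Box_ext; [|eauto]. intros i Hi; unfold qq; rewrite Hz; auto.
  - intros w. split.
    + intros [p [a1 [a2 [b1 [b2 [Hg' [H1 H2]]]]]]]. apply Hg'; auto.
    + intros Hw. destruct (HU _ Hw) as [r [Hr Hr']].
      destruct (Hg (A w) (B w) r Hr) as [d [Hd Hd']].
      destruct (archimed_cor1 (d / (2 * (INR n + INR m + 1)))) as [N [HN HN0]].
      { assert (0 <= INR n) by apply pos_INR. assert (0 <= INR m) by apply pos_INR. apply Rdiv_lt_0_compat; lra. }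
      destruct N as [|p]; [lia|]. exists p.
      assert (Hrho : 0 < rho p) by (unfold rho; apply Rinv_0_lt_compat, lt_0_INR; lia).
      assert (Hrho2 : 2 * rho p * (INR n + INR m + 1) < d).
      { assert (0 <= INR n) by apply pos_INR. assert (0 <= INR m) by apply pos_INR.
        fold (rho p) in HN. apply (Rmult_lt_compat_r (2 * (INR n + INR m + 1))) in HN; [|lra].
        field_simplify in HN; lra. }
      set (tA := fun i => proj1_sig (constructive_indefinite_description _ (grid_point (vget (A w) i) (rho p) Hrho))).
      set (tB := fun i => proj1_sig (constructive_indefinite_description _ (grid_point (vget (B w) i) (rho p) Hrho))).
      assert (HtA : forall i, Rabs (vget (A w) i - IZR (tA i) * rho p) < rho p).
      { intros i. unfold tA. destruct constructive_indefinite_description; auto. }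
      assert (HtB : forall i, Rabs (vget (B w) i - IZR (tB i) * rho p) < rho p).
      { intros i. unfold tB. destruct constructive_indefinite_description; auto. }
      exists (fun i => Z.to_nat (tA i)), (fun i => Z.to_nat (- tA i)), (fun i => Z.to_nat (tB i)), (fun i => Z.to_nat (- tB i)).
      assert (EA : forall i, qq p (fun i => Z.to_nat (tA i)) (fun i => Z.to_nat (- tA i)) i = IZR (tA i) * rho p).
      { intros i; unfold qq; rewrite IZR_split; auto. }
      assert (EB : forall i, qq p (fun i => Z.to_nat (tB i)) (fun i => Z.to_nat (- tB i)) i = IZR (tB i) * rho p).
      { intros i; unfold qq; rewrite IZR_split; auto. }
      split; [|split].
      * intros a b Ha Hb. apply Hr'. apply Hd'.
        -- eapply Rle_lt_trans. apply vnorm_vsub_N1.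
           eapply Rle_lt_trans. unfold N1. apply (rsum_le _ (fun _ => 2 * rho p)).
           { intros i Hi. specialize (Ha i Hi). rewrite EA in Ha. specialize (HtA i).
             replace (vget a i - vget (A w) i) with ((vget a i - IZR (tA i) * rho p) - (vget (A w) i - IZR (tA i) * rho p)) by ring.
             eapply Rle_trans. apply Rabs_sub_triang. lra. }
           rewrite rsum_const. assert (0 <= INR m) by apply pos_INR. assert (0 <= INR n) by apply pos_INR. nra.
        -- eapply Rle_lt_trans. apply vnorm_vsub_N1.
           eapply Rle_lt_trans. unfold N1. apply (rsum_le _ (fun _ => 2 * rho p)).
           { intros i Hi. specialize (Hb i Hi). rewrite EB in Hb. specialize (HtB i).
             replace (vget b i - vget (B w) i) with ((vget b i - IZR (tB i) * rho p) - (vget (B w) i - IZR (tB i) * rho p)) by ring.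
             eapply Rle_trans. apply Rabs_sub_triang. lra. }
           rewrite rsum_const. assert (0 <= INR m) by apply pos_INR. assert (0 <= INR n) by apply pos_INR. nra.
      * intros i Hi. rewrite EA. auto.
      * intros i Hi. rewrite EB. auto.
Qed.

Lemma open_union {n} (I : Type) (U : I -> vec n -> Prop) : (forall i, is_open (U i)) -> is_open (fun v => exists i, U i v).
Proof. intros H x [i Hi]. destruct (H i x Hi) as [r [Hr Hr']]. exists r; split; auto. intros y Hy; exists i; auto. Qed.

Lemma open_and_const {n} (Q : Prop) (U : vec n -> Prop) : is_open U -> is_open (fun v => Q /\ U v).
Proof. intros H x [HQ Hx]. destruct (H x Hx) as [r [Hr Hr']]. exists r; split; auto. Qed.

Lemma vnorm_triang_sub {n} (a b c : vec n) : vnorm (vsub a c) <= vnorm (vsub a b) + vnorm (vsub b c).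
Proof.
  rewrite !vnorm_E2. eapply Rle_trans; [|apply E2_triang]. right. apply E2_ext. intros i _.
  rewrite !vget_vsub. ring.
Qed.

Lemma vnorm_sym {n} (a b : vec n) : vnorm (vsub a b) = vnorm (vsub b a).
Proof.
  rewrite !vnorm_E2. replace (E2 n (vget (vsub b a))) with (E2 n (fun i => -1 * vget (vsub a b) i)).
  rewrite E2_scal. replace (Rabs (-1)) with 1 by (unfold Rabs; destruct Rcase_abs; lra). ring. apply E2_ext. intros; rewrite !vget_vsub; ring.
Qed.

Lemma open_gt_vnorm {n} (c : vec n) (delta : R) : is_open (fun v => vnorm (vsub v c) > delta).
Proof.
  intros x Hx. exists (vnorm (vsub x c) - delta). split. lra. intros y Hy.
  assert (H := vnorm_triang_sub x y c). rewrite (vnorm_sym x y) in H. lra.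
Qed.

Lemma open_gt_N1 {n} (a : R) : is_open (fun v : vec n => N1 n (vget v) > a).
Proof.
  intros x Hx. exists ((N1 n (vget x) - a) / (INR n + 1)).
  assert (0 <= INR n) by apply pos_INR. split. apply Rdiv_lt_0_compat; lra.
  intros y Hy.
  assert (H1 := N1_triang_sub n (vget x) (vget y) (fun _ => 0)).
  assert (H2 := N1_le_E2 n (fun i => vget x i - vget y i)).
  assert (E1 : N1 n (fun i => vget x i - 0) = N1 n (vget x)) by (apply N1_ext; intros; ring).
  assert (E2' : N1 n (fun i => vget y i - 0) = N1 n (vget y)) by (apply N1_ext; intros; ring).
  assert (E3 : E2 n (fun i => vget x i - vget y i) = vnorm (vsub y x)).
  { rewrite vnorm_sym, vnorm_E2. apply E2_ext; intros; rewrite vget_vsub; auto. }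
  cbv beta in H1. rewrite E1, E2' in H1. rewrite E3 in H2.
  apply (Rmult_lt_compat_l (INR n + 1)) in Hy; [|lra]. field_simplify in Hy; [|lra].
  assert (0 <= vnorm (vsub y x)) by apply sqrt_pos. nra.
Qed.

Definition CB (n : nat) (lo hi : nat -> R) (v : vec n) : Prop := forall i, (i < n)%nat -> lo i <= vget v i <= hi i.

Definition upd (g : nat -> R) (c : nat) (v : R) : nat -> R := fun i => if Nat.eqb i c then v else g i.

Lemma cv_le (u : nat -> R) l b : Un_cv u l -> (forall k, u k <= b) -> l <= b.
Proof.
  intros Hc Hb. destruct (Rle_dec l b); auto. exfalso.
  destruct (Hc (l - b)) as [N HN]. lra. specialize (HN N (le_n N)). specialize (Hb N).
  unfold Rdist in HN. apply Rabs_def2 in HN. lra.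
Qed.

Lemma pow2_ge k : INR (S k) <= 2 ^ k.
Proof. induction k. simpl; lra. rewrite S_INR. simpl pow. rewrite S_INR in *. assert (0 <= INR k) by apply pos_INR. lra. Qed.

Lemma box_compact (n : nat) (Rb : R) : 0 <= Rb ->
  is_compact (fun v : vec n => forall i, (i < n)%nat -> Rabs (vget v i) <= Rb).
Proof.
  intros HR I U HU Hcov. apply NNPP. intros Hbad0.
  set (bad := fun (b : (nat -> R) * (nat -> R)) =>
    ~ exists l : list I, forall x, CB n (fst b) (snd b) x -> exists i, In i l /\ U i x).
  assert (Hsplit : forall lo hi c, (c < n)%nat -> bad (lo, hi) ->
     bad (lo, upd hi c ((lo c + hi c) / 2)) \/ bad (upd lo c ((lo c + hi c) / 2), hi)).
  { intros lo hi c Hc Hb. apply NNPP. intros Hn. apply not_or_and in Hn. destruct Hn as [H1 H2].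
    apply NNPP in H1. apply NNPP in H2. destruct H1 as [l1 Hl1]. destruct H2 as [l2 Hl2].
    apply Hb. exists (l1 ++ l2). intros x Hx.
    destruct (Rle_dec (vget x c) ((lo c + hi c) / 2)).
    - destruct (Hl1 x) as [i [Hi Hi']].
      { intros j Hj. simpl. unfold upd. destruct (Nat.eqb_spec j c). subst. split; [apply Hx; auto|auto]. apply Hx; auto. }
      exists i. split; auto. apply in_or_app; auto.
    - destruct (Hl2 x) as [i [Hi Hi']].
      { intros j Hj. simpl. unfold upd. destruct (Nat.eqb_spec j c). subst. split; [lra|apply Hx; auto]. apply Hx; auto. }
      exists i. split; auto. apply in_or_app; auto. }
  assert (Hfull : forall lo hi, bad (lo, hi) /\ (forall i, (i < n)%nat -> lo i <= hi i) -> exists lo' hi', bad (lo', hi') /\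
     forall i, (i < n)%nat -> lo i <= lo' i /\ hi' i <= hi i /\ hi' i - lo' i = (hi i - lo i) / 2).
  { intros lo hi [Hb Hle].
    assert (Hc : forall c, (c <= n)%nat -> exists lo' hi', bad (lo', hi') /\
      forall i, (i < n)%nat -> ((i < c)%nat -> lo i <= lo' i /\ hi' i <= hi i /\ hi' i - lo' i = (hi i - lo i) / 2)
        /\ ((c <= i)%nat -> lo' i = lo i /\ hi' i = hi i)).
    { induction c; intros Hcn.
      - exists lo, hi. split; auto. intros i Hi. split; intros; [lia|]. auto.
      - destruct IHc as [lo1 [hi1 [Hb1 H1]]]. lia.
        destruct (Hsplit lo1 hi1 c ltac:(lia) Hb1) as [Hb2|Hb2]; eexists; eexists; split; try apply Hb2.
        + intros i Hi. unfold upd. destruct (Nat.eqb_spec i c).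
          * subst. destruct (H1 c Hi) as [_ H1']. destruct (H1' (le_n c)) as [-> ->].
            split; intros; [|lia]. specialize (Hle c Hi). lra.
          * destruct (H1 i Hi) as [Ha Hb']. split; intros. apply Ha; lia. apply Hb'; lia.
        + intros i Hi. unfold upd. destruct (Nat.eqb_spec i c).
          * subst. destruct (H1 c Hi) as [_ H1']. destruct (H1' (le_n c)) as [-> ->].
            split; intros; [|lia]. specialize (Hle c Hi). lra.
          * destruct (H1 i Hi) as [Ha Hb']. split; intros. apply Ha; lia. apply Hb'; lia. }
    destruct (Hc n (le_n n)) as [lo' [hi' [Hb' H']]]. exists lo', hi'. split; auto.
    intros i Hi. apply (H' i Hi); auto. }
  set (stepf := fun b : (nat -> R) * (nat -> R) =>
     match excluded_middle_informative (bad b /\ (forall i, (i < n)%nat -> fst b i <= snd b i)) with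
     | left Hb => let lo := fst b in let hi := snd b in
        (proj1_sig (constructive_indefinite_description _ (Hfull (fst b) (snd b) Hb)),
         proj1_sig (constructive_indefinite_description _
            (proj2_sig (constructive_indefinite_description _ (Hfull (fst b) (snd b) Hb)))))
     | right _ => b end).
  assert (Hstep : forall b, bad b /\ (forall i, (i < n)%nat -> fst b i <= snd b i) -> bad (stepf b) /\ forall i, (i < n)%nat ->
     fst b i <= fst (stepf b) i /\ snd (stepf b) i <= snd b i /\
     snd (stepf b) i - fst (stepf b) i = (snd b i - fst b i) / 2).
  { intros b Hb. unfold stepf. destruct (excluded_middle_informative (bad b /\ (forall i, (i < n)%nat -> fst b i <= snd b i))); [|tauto].
    match goal with |- context [constructive_indefinite_description _ (Hfull ?x ?y ?z)] =>
      destruct (constructive_indefinite_description _ (Hfull x y z)) as [lo' Hlo'] end.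
    simpl. destruct (constructive_indefinite_description _ Hlo') as [hi' Hhi']. simpl. auto. }
  set (b0 := ((fun _ : nat => - Rb), (fun _ : nat => Rb))).
  set (bs := fun k => Nat.iter k stepf b0).
  assert (Hbs : forall k, bad (bs k) /\ forall i, (i < n)%nat ->
     fst b0 i <= fst (bs k) i /\ snd (bs k) i <= snd b0 i /\ snd (bs k) i - fst (bs k) i = 2 * Rb / 2 ^ k).
  { induction k.
    - split. intros [l Hl]. apply Hbad0. exists l. intros x Hx. apply Hl. intros i Hi. simpl. assert (H := Hx i Hi). unfold Rabs in H; destruct Rcase_abs in H; lra.
      intros i Hi. simpl. lra.
    - destruct IHk as [Hb Hk]. destruct (Hstep (bs k)) as [Hb' Hs].
      { split; auto. intros i Hi. destruct (Hk i Hi) as [_ [_ H3]].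
        assert (0 <= 2 * Rb / 2 ^ k). { apply Rdiv_le_0_compat. lra. apply pow_lt; lra. } lra. }
      change (bs (S k)) with (stepf (bs k)). split; auto. intros i Hi.
      destruct (Hk i Hi) as [H1 [H2 H3]]. destruct (Hs i Hi) as [H4 [H5 H6]].
      split; [lra|split; [lra|]]. rewrite H6, H3. simpl pow. field. apply pow_nonzero. lra. }
  assert (Hmon : forall k i, (i < n)%nat -> fst (bs k) i <= fst (bs (S k)) i /\ snd (bs (S k)) i <= snd (bs k) i).
  { intros k i Hi. destruct (Hstep (bs k)) as [_ Hs].
    { split. apply Hbs. intros i' Hi'. destruct (Hbs k) as [_ H]. destruct (H i' Hi') as [_ [_ H3]].
      assert (0 <= 2 * Rb / 2 ^ k). { apply Rdiv_le_0_compat. lra. apply pow_lt; lra. } lra. } destruct (Hs i Hi) as [H1 [H2 _]]. split; auto. }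
  assert (Hmon2 : forall k k' i, (i < n)%nat -> (k <= k')%nat -> fst (bs k) i <= fst (bs k') i /\ snd (bs k') i <= snd (bs k) i).
  { intros k k' i Hi Hk. induction Hk. lra. destruct (Hmon m i Hi). lra. }
  assert (Hlohi : forall k i, (i < n)%nat -> fst (bs k) i <= snd (bs k) i).
  { intros k i Hi. destruct (Hbs k) as [_ H]. destruct (H i Hi) as [_ [_ H3]].
    assert (0 <= 2 * Rb / 2 ^ k). { apply Rdiv_le_0_compat. lra. apply pow_lt; lra. } lra. }
  assert (Hlim : forall i, exists p, (i < n)%nat -> forall k, fst (bs k) i <= p <= snd (bs k) i).
  { intros i. destruct (lt_dec i n) as [Hi|Hi]; [|exists 0; intros; lia].
    assert (Hg : Un_growing (fun k => fst (bs k) i)). { intros k. apply Hmon; auto. }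
    assert (Hub : has_ub (fun k => fst (bs k) i)).
    { exists Rb. intros r [k ->]. destruct (Hbs k) as [_ H]. destruct (H i Hi) as [_ [H2 _]].
      simpl in H2. assert (H4 := Hlohi k i Hi). lra. }
    destruct (growing_cv _ Hg Hub) as [p Hp]. exists p. intros _ k. split.
    apply (growing_ineq (fun k => fst (bs k) i) p Hg Hp).
    apply (cv_le (fun k => fst (bs k) i) p); auto. intros k'. destruct (le_ge_dec k k').
    destruct (Hmon2 k k' i Hi l). assert (H3 := Hlohi k' i Hi). lra.
    destruct (Hmon2 k' k i Hi g). assert (H3 := Hlohi k i Hi). lra. }
  destruct (choice _ Hlim) as [p Hp].
  set (pv := mkvec n p).
  assert (Hpv : forall i, (i < n)%nat -> vget pv i = p i) by (intros; apply vget_mkvec; auto).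
  destruct (Hcov pv) as [j Hj].
  { intros i Hi. rewrite Hpv by auto. destruct (Hp i Hi 0%nat) as [H1 H2]. simpl in H1, H2. apply Rabs_le. lra. }
  destruct (HU j pv Hj) as [r [Hr Hr']].
  destruct (archimed_cor1 (r / (2 * Rb * INR n + 1))) as [k [Hk Hk0]].
  { assert (0 <= INR n) by apply pos_INR. apply Rdiv_lt_0_compat; auto. nra. }
  apply (proj1 (Hbs k)). exists (j :: nil). intros y Hy. exists j. split; [left; auto|].
  apply Hr'. eapply Rle_lt_trans. apply vnorm_vsub_N1. unfold N1.
  eapply Rle_lt_trans. apply (rsum_le _ (fun _ => 2 * Rb / 2 ^ k)).
  { intros i Hi. rewrite Hpv by auto. destruct (Hp i Hi k) as [H1 H2]. destruct (Hy i Hi) as [H3 H4].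
    destruct (Hbs k) as [_ H]. destruct (H i Hi) as [_ [_ H5]]. rewrite <- H5. apply Rabs_le. lra. }
  rewrite rsum_const. assert (HP2 := pow2_ge k). assert (0 <= INR n) by apply pos_INR.
  assert (0 < INR k) by (apply lt_0_INR; auto).
  assert (Hk' : / INR k * (2 * Rb * INR n + 1) < r).
  { assert (0 < 2 * Rb * INR n + 1) by nra.
    replace r with ((r / (2 * Rb * INR n + 1)) * (2 * Rb * INR n + 1)) by (field; lra).
    apply Rmult_lt_compat_r; auto. }
  rewrite S_INR in HP2.
  apply Rle_lt_trans with (/ INR k * (2 * Rb * INR n + 1)); auto.
  unfold Rdiv. rewrite <- Rmult_assoc.
  apply Rle_trans with (INR n * (2 * Rb) * / INR k).
  - apply Rmult_le_compat_l. nra. apply Rinv_le_contravar; lra.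
  - rewrite (Rmult_comm (/ INR k)). apply Rmult_le_compat_r. left; apply Rinv_0_lt_compat; lra. lra.
Qed.

From Coquelicot Require Derive.

Lemma mvt (f df : R -> R) (a b : R) : a < b -> (forall x : R, a < x < b -> derivable_pt_lim f x (df x)) ->
  (forall x : R, a <= x <= b -> continuity_pt f x) -> exists c, a <= c <= b /\ f b - f a = df c * (b - a).
Proof.
  intros Hab Hd Hc. destruct (Derive.MVT_gen f a b df) as [c [Hc1 Hc2]].
  - rewrite Rmin_left, Rmax_right by lra. intros x Hx. apply Derive.is_derive_Reals. auto.
  - rewrite Rmin_left, Rmax_right by lra. auto.
  - rewrite Rmin_left, Rmax_right in Hc1 by lra. eauto.
Qed.

Lemma ode_coord n (fbar : vec n -> vec n) (Xc : R -> vec n) : ode_solution_nonneg fbar Xc ->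
  forall t, 0 <= t -> forall e, 0 < e -> exists d, 0 < d /\ forall h, h <> 0 -> Rabs h < d -> 0 <= t + h ->
    forall i, (i < n)%nat -> Rabs ((vget (Xc (t + h)) i - vget (Xc t) i) / h - vget (fbar (Xc t)) i) < e.
Proof.
  intros Hode t Ht e He. destruct (Hode t Ht e He) as [d [Hd Hd']]. exists d. split; auto.
  intros h Hh Hhd Hth i Hi. specialize (Hd' h Hh Hhd Hth).
  eapply Rle_lt_trans; [|apply Hd']. rewrite vnorm_E2.
  eapply Rle_trans; [|apply (coord_le_E2 _ _ i Hi)]. right. f_equal.
  rewrite vget_vsub, vget_vscal, vget_vsub. unfold Rdiv. ring.
Qed.

Definition xi {n} (Xc : R -> vec n) (i : nat) (s : R) : R := vget (Xc (Rmax 0 s)) i.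

Lemma xi_cont n (fbar : vec n -> vec n) (Xc : R -> vec n) : ode_solution_nonneg fbar Xc ->
  forall i t, (i < n)%nat -> 0 <= t -> continuity_pt (xi Xc i) t.
Proof.
  intros Hode i t Hi Ht. destruct (ode_coord n fbar Xc Hode t Ht 1 ltac:(lra)) as [d [Hd Hd']].
  set (g := vget (fbar (Xc t)) i).
  assert (Hb : forall h, Rabs h < d -> 0 <= t + h -> Rabs (vget (Xc (t + h)) i - vget (Xc t) i) <= Rabs h * (Rabs g + 1)).
  { intros h Hh Hth. destruct (Req_dec h 0). subst. rewrite Rplus_0_r, Rminus_diag, Rabs_R0. lra.
    specialize (Hd' h H Hh Hth i Hi). fold g in Hd'.
    replace (vget (Xc (t + h)) i - vget (Xc t) i) with (h * ((vget (Xc (t + h)) i - vget (Xc t) i) / h)) by (field; auto).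
    rewrite Rabs_mult. apply Rmult_le_compat_l. apply Rabs_pos.
    replace ((vget (Xc (t + h)) i - vget (Xc t) i) / h) with (((vget (Xc (t + h)) i - vget (Xc t) i) / h - g) + g) by ring.
    eapply Rle_trans. apply Rabs_triang. lra. }
  intros e He. exists (Rmin d (e / (Rabs g + 1))). split.
  { apply Rmin_pos; auto. apply Rdiv_lt_0_compat; auto. assert (0 <= Rabs g) by apply Rabs_pos. lra. }
  assert (Hmain : forall x : R, Rabs (x - t) < Rmin d (e / (Rabs g + 1)) -> Rabs (xi Xc i x - xi Xc i t) < e).
  2:{ intros x [_ Hx]. apply Hmain. apply Hx. }
  intros x Hx. unfold xi.
  assert (Hg0 : 0 < Rabs g + 1) by (assert (0 <= Rabs g) by apply Rabs_pos; lra).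
  assert (Hx1 : Rabs (x - t) < d) by (eapply Rlt_le_trans; [apply Hx| apply Rmin_l]).
  assert (Hx2 : Rabs (x - t) * (Rabs g + 1) < e).
  { assert (Rabs (x - t) < e / (Rabs g + 1)) by (eapply Rlt_le_trans; [apply Hx| apply Rmin_r]).
    apply (Rmult_lt_compat_r (Rabs g + 1)) in H; auto. field_simplify in H; lra. }
  rewrite (Rmax_right 0 t) by auto.
  destruct (Rle_dec 0 x).
  - rewrite Rmax_right by auto. replace x with (t + (x - t)) by ring.
    eapply Rle_lt_trans. apply Hb; auto. replace (t + (x - t)) with x by ring. auto. auto.
  - rewrite Rmax_left by lra. destruct (Req_dec t 0).
    + subst. rewrite Rminus_diag, Rabs_R0. lra.
    + replace 0 with (t + (- t)) by ring. eapply Rle_lt_trans. apply Hb.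
      rewrite Rabs_Ropp, Rabs_right by lra. rewrite Rabs_left in Hx1 by lra. lra. lra.
      rewrite Rabs_Ropp, Rabs_right by lra. rewrite Rabs_left in Hx2 by lra.
      assert (0 <= t * (Rabs g + 1)) by (apply Rmult_le_pos; lra).
      assert (- (x - t) * (Rabs g + 1) = t * (Rabs g + 1) + (- x) * (Rabs g + 1)) by ring.
      assert (0 < (- x) * (Rabs g + 1)) by (apply Rmult_lt_0_compat; lra). lra.
Qed.

Lemma xi_deriv n (fbar : vec n -> vec n) (Xc : R -> vec n) : ode_solution_nonneg fbar Xc ->
  forall i t, (i < n)%nat -> 0 < t -> derivable_pt_lim (xi Xc i) t (vget (fbar (Xc t)) i).
Proof.
  intros Hode i t Hi Ht e He. destruct (ode_coord n fbar Xc Hode t ltac:(lra) e He) as [d [Hd Hd']].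
  exists (mkposreal (Rmin d t) (Rmin_pos _ _ Hd Ht)). intros h Hh Hhd. simpl in Hhd.
  unfold xi. rewrite (Rmax_right 0 t), (Rmax_right 0 (t + h)) by (try lra; assert (Rabs h < t) by (eapply Rlt_le_trans; [apply Hhd|apply Rmin_r]); apply Rabs_def2 in H; lra).
  apply Hd'; auto. eapply Rlt_le_trans; [apply Hhd|apply Rmin_l].
  assert (Rabs h < t) by (eapply Rlt_le_trans; [apply Hhd|apply Rmin_r]). apply Rabs_def2 in H; lra.
Qed.

Lemma Xc_mvt n (fbar : vec n -> vec n) (Xc : R -> vec n) : ode_solution_nonneg fbar Xc ->
  forall i s t, (i < n)%nat -> 0 <= s <= t -> exists c, s <= c <= t /\
    vget (Xc t) i - vget (Xc s) i = vget (fbar (Xc c)) i * (t - s).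
Proof.
  intros Hode i s t Hi Hst. destruct (Req_dec s t) as [Heq|Hne].
  - subst. exists t. split. lra. ring.
  - destruct (mvt (xi Xc i) (fun c => vget (fbar (Xc c)) i) s t) as [c [Hc Hc']].
    + lra.
    + intros x Hx. apply xi_deriv; auto. lra.
    + intros x Hx. apply (xi_cont n fbar); auto. lra.
    + exists c. split; auto. unfold xi in Hc'. rewrite !Rmax_right in Hc' by lra. auto.
Qed.

Lemma Xc_bounded n (fbar : vec n -> vec n) (Xc : R -> vec n) : ode_solution_nonneg fbar Xc ->
  forall M, 0 <= M -> exists R0, 0 <= R0 /\ forall t, 0 <= t <= M -> forall i, (i < n)%nat -> Rabs (vget (Xc t) i) <= R0.
Proof.
  intros Hode M HM.
  assert (Hc : forall i, exists B, 0 <= B /\ ((i < n)%nat -> forall t, 0 <= t <= M -> Rabs (vget (Xc t) i) <= B)).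
  { intros i. destruct (lt_dec i n) as [Hi|Hi]; [|exists 0; split; [lra| intros; lia]].
    destruct (continuity_ab_maj (xi Xc i) 0 M HM) as [a [Ha Ha']]. intros; apply (xi_cont n fbar); auto; lra.
    destruct (continuity_ab_min (xi Xc i) 0 M HM) as [b [Hb Hb']]. intros; apply (xi_cont n fbar); auto; lra.
    exists (Rabs (xi Xc i a) + Rabs (xi Xc i b)). split. assert (H1 := Rabs_pos (xi Xc i a)). assert (H2 := Rabs_pos (xi Xc i b)). lra.
    intros _ t Ht. specialize (Ha t Ht). specialize (Hb t Ht). unfold xi in Ha, Hb. rewrite (Rmax_right 0 t) in Ha, Hb by lra.
    unfold xi in *. revert Ha Hb. generalize (vget (Xc (Rmax 0 a)) i) (vget (Xc (Rmax 0 b)) i) (vget (Xc t) i).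
    intros u v w Hu Hv. unfold Rabs; repeat destruct Rcase_abs; lra. }
  destruct (choice _ Hc) as [B HB].
  exists (rsum B n). split. apply rsum_nonneg; intros; apply HB.
  intros t Ht i Hi. eapply Rle_trans. apply (proj2 (HB i)); auto. apply rsum_term_le; auto. intros; apply HB.
Qed.

Lemma exp_mono a b : a <= b -> exp a <= exp b.
Proof. intros H. destruct (Req_dec a b). subst; lra. left. apply exp_increasing. lra. Qed.

Lemma pow_exp_bound a k : 0 <= a -> (1 + a) ^ k <= exp (a * INR k).
Proof.
  intros Ha. induction k. simpl. rewrite Rmult_0_r, exp_0. lra.
  rewrite S_INR. replace (a * (INR k + 1)) with (a * INR k + a) by ring. rewrite exp_plus. simpl pow.
  assert (H1 := exp_ineq1_le a). assert (0 <= (1 + a) ^ k) by (apply pow_le; lra).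
  rewrite Rmult_comm. apply Rmult_le_compat; auto; lra.
Qed.

Lemma Int_part_nonneg r : 0 <= r -> (0 <= Int_part r)%Z.
Proof.
  intros H. destruct (base_Int_part r) as [H1 H2]. apply le_IZR. simpl.
  destruct (Rle_dec 0 (IZR (Int_part r))); auto. exfalso.
  assert (IZR (Int_part r) < 0) by lra. apply lt_IZR in H0.
  assert (Int_part r <= -1)%Z by lia. apply IZR_le in H3. simpl in H3. lra.
Qed.

Definition floorn (r : R) : nat := Z.to_nat (Int_part r).

Lemma floorn_spec r : 0 <= r -> INR (floorn r) <= r < INR (floorn r) + 1.
Proof.
  intros H. unfold floorn. rewrite INR_IZR_INZ, Z2Nat.id by (apply Int_part_nonneg; auto).
  destruct (base_Int_part r). lra.
Qed.

Lemma floorn_mono r s : 0 <= r -> r <= s -> (floorn r <= floorn s)%nat.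
Proof.
  intros Hr Hrs. destruct (floorn_spec r Hr). destruct (floorn_spec s ltac:(lra)).
  destruct (le_lt_dec (floorn r) (floorn s)); auto. exfalso.
  apply le_INR in l. rewrite S_INR in l. lra.
Qed.

Lemma floorn_le r (k : nat) : 0 <= r -> INR k <= r -> (k <= floorn r)%nat.
Proof.
  intros Hr Hk. destruct (floorn_spec r Hr). destruct (le_lt_dec k (floorn r)); auto. exfalso.
  apply le_INR in l. rewrite S_INR in l. lra.
Qed.

Lemma switch (n : nat) (a : nat -> nat -> nat -> R) (iota : nat -> nat) (S : R) (K : nat) :
  (forall j, (iota j <= iota (Datatypes.S j))%nat) ->
  (forall j N, (j < K)%nat -> (N <= K)%nat -> N1 n (fun c => rsum (fun l => a (iota j) l c) N) <= S) ->
  forall k, (Datatypes.S k <= K)%nat ->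
    N1 n (fun c => rsum (fun j => a (iota j) j c) (Datatypes.S k) - rsum (fun l => a (iota k) l c) (Datatypes.S k))
      <= 2 * INR (iota k) * S.
Proof.
  intros Hmon HS. induction k; intros Hk.
  - simpl. replace (N1 n _) with 0. assert (0 <= S). { eapply Rle_trans; [apply N1_nonneg| apply (HS 0%nat 0%nat)]; lia. }
    assert (0 <= INR (iota 0%nat)) by apply pos_INR. nra.
    unfold N1. transitivity (rsum (fun _ => 0) n). rewrite rsum_const; ring. apply rsum_ext; intros. 
    replace (0 + a (iota 0%nat) 0%nat i - (0 + a (iota 0%nat) 0%nat i)) with 0 by ring. rewrite Rabs_R0; auto.
  - assert (HSk := IHk ltac:(lia)).
    assert (HS0 : 0 <= S). { eapply Rle_trans; [apply N1_nonneg| apply (HS 0%nat 0%nat)]; lia. }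
    assert (E : forall c, rsum (fun j => a (iota j) j c) (Datatypes.S (Datatypes.S k)) - rsum (fun l => a (iota (Datatypes.S k)) l c) (Datatypes.S (Datatypes.S k))
      = (rsum (fun j => a (iota j) j c) (Datatypes.S k) - rsum (fun l => a (iota k) l c) (Datatypes.S k))
        + (rsum (fun l => a (iota k) l c) (Datatypes.S k) - rsum (fun l => a (iota (Datatypes.S k)) l c) (Datatypes.S k))).
    { intros c. change (rsum (fun j => a (iota j) j c) (Datatypes.S (Datatypes.S k))) with
        (rsum (fun j => a (iota j) j c) (Datatypes.S k) + a (iota (Datatypes.S k)) (Datatypes.S k) c).
      change (rsum (fun l => a (iota (Datatypes.S k)) l c) (Datatypes.S (Datatypes.S k))) with
        (rsum (fun l => a (iota (Datatypes.S k)) l c) (Datatypes.S k) + a (iota (Datatypes.S k)) (Datatypes.S k) c). ring. }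
    rewrite (N1_ext _ _ _ (fun c _ => E c)). eapply Rle_trans. apply N1_triang.
    destruct (Nat.eq_dec (iota (Datatypes.S k)) (iota k)) as [Heq|Hne].
    + rewrite Heq. replace (N1 n (fun c => rsum (fun l => a (iota k) l c) (Datatypes.S k) - rsum (fun l => a (iota k) l c) (Datatypes.S k))) with 0.
      lra. unfold N1. transitivity (rsum (fun _ => 0) n). rewrite rsum_const; ring. apply rsum_ext; intros.
      rewrite Rminus_diag, Rabs_R0; auto.
    + assert (Hlt : (Datatypes.S (iota k) <= iota (Datatypes.S k))%nat) by (specialize (Hmon k); lia).
      apply le_INR in Hlt. rewrite S_INR in Hlt.
      assert (H2 : N1 n (fun c => rsum (fun l => a (iota k) l c) (Datatypes.S k) - rsum (fun l => a (iota (Datatypes.S k)) l c) (Datatypes.S k)) <= 2 * S).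
      { eapply Rle_trans. apply (N1_triang_sub _ _ (fun _ => 0)). cbv beta.
        replace (N1 n (fun i => rsum (fun l => a (iota k) l i) (Datatypes.S k) - 0)) with (N1 n (fun i => rsum (fun l => a (iota k) l i) (Datatypes.S k))) by (apply N1_ext; intros; ring).
        replace (N1 n (fun i => 0 - rsum (fun l => a (iota (Datatypes.S k)) l i) (Datatypes.S k))) with (N1 n (fun i => rsum (fun l => a (iota (Datatypes.S k)) l i) (Datatypes.S k))).
        assert (N1 n (fun i => rsum (fun l => a (iota k) l i) (Datatypes.S k)) <= S) by (apply HS; lia).
        assert (N1 n (fun i => rsum (fun l => a (iota (Datatypes.S k)) l i) (Datatypes.S k)) <= S) by (apply HS; lia). lra.
        rewrite <- (N1_opp n). apply N1_ext; intros; ring. }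
      assert (Hpos : 0 <= INR (iota k)) by apply pos_INR. nra.
Qed.

Lemma gronwall (u : nat -> R) (a g : R) (K : nat) : 0 <= a -> 0 <= g -> u 0%nat <= 0 ->
  (forall k, (Datatypes.S k <= K)%nat -> u (Datatypes.S k) <= (1 + a) * u k + a * g) ->
  forall k, (k <= K)%nat -> u k <= INR k * a * g * (1 + a) ^ k.
Proof.
  intros Ha Hg H0 Hs. induction k; intros Hk.
  - simpl. lra.
  - eapply Rle_trans. apply Hs; auto. specialize (IHk ltac:(lia)).
    rewrite S_INR. simpl pow.
    assert (1 <= (1 + a) ^ k) by (apply pow_R1_Rle; lra).
    assert (0 <= INR k) by apply pos_INR.
    assert (0 <= a * g) by nra.
    assert (0 <= INR k * a * g) by nra.
    assert ((1 + a) * u k <= (1 + a) * (INR k * a * g * (1 + a) ^ k)) by (apply Rmult_le_compat_l; lra).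
    assert (a * g <= a * g * ((1 + a) * (1 + a) ^ k)) by (assert (1 <= (1 + a) * (1 + a) ^ k) by nra; nra).
    nra.
Qed.

Definition dN1 {n} (a b : vec n) := N1 n (fun c => vget a c - vget b c).
Definition Dbox (n : nat) (R1 : R) (z : vec n) := forall i, (i < n)%nat -> Rabs (vget z i) <= R1.

Lemma dN1_nonneg {n} (a b : vec n) : 0 <= dN1 a b.
Proof. apply N1_nonneg. Qed.
Lemma dN1_sym {n} (a b : vec n) : dN1 a b = dN1 b a.
Proof. apply N1_sub_sym. Qed.
Lemma dN1_triang {n} (a b c : vec n) : dN1 a c <= dN1 a b + dN1 b c.
Proof. apply N1_triang_sub. Qed.
Lemma vnorm_le_dN1 {n} (a b : vec n) : vnorm (vsub a b) <= dN1 a b.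
Proof. apply vnorm_vsub_N1. Qed.

Lemma coord_le_N1v n (v : vec n) i : (i < n)%nat -> Rabs (vget v i) <= N1 n (vget v).
Proof. intros; apply N1_coord; auto. Qed.

Lemma Dbox_near n R0 (z a : vec n) : Dbox n R0 a -> dN1 z a <= 1 -> Dbox n (R0 + 1) z.
Proof.
  intros Ha Hz i Hi. specialize (Ha i Hi). assert (H := N1_coord n (fun c => vget z c - vget a c) i Hi).
  unfold dN1 in Hz. replace (vget z i) with ((vget z i - vget a i) + vget a i) by ring.
  eapply Rle_trans. apply Rabs_triang. lra.
Qed.

Lemma Dbox_mono n R0 R1 (z : vec n) : R0 <= R1 -> Dbox n R0 z -> Dbox n R1 z.
Proof. intros H Hz i Hi. specialize (Hz i Hi). lra. Qed.

Lemma Xc_lip n (fbar : vec n -> vec n) (Xc : R -> vec n) (Hode : ode_solution_nonneg fbar Xc) M Bf R1 :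
  (forall t, 0 <= t <= M -> Dbox n R1 (Xc t)) -> (forall z, Dbox n R1 z -> N1 n (vget (fbar z)) <= Bf) ->
  forall s t, 0 <= s <= t -> t <= M -> dN1 (Xc t) (Xc s) <= INR n * Bf * (t - s).
Proof.
  intros HD HB s t Hst HtM. unfold dN1, N1. rewrite Rmult_assoc, <- rsum_const. apply rsum_le. intros i Hi.
  destruct (Xc_mvt n fbar Xc Hode i s t Hi Hst) as [c [Hc Hc']]. rewrite Hc'. rewrite Rabs_mult.
  rewrite (Rabs_right (t - s)) by lra. apply Rmult_le_compat_r. lra.
  eapply Rle_trans. apply coord_le_N1v; auto. apply HB, HD. lra.
Qed.

Lemma Xc_loc n (fbar : vec n -> vec n) (Xc : R -> vec n) (Hode : ode_solution_nonneg fbar Xc) M Bf R1 L :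
  0 <= L -> (forall t, 0 <= t <= M -> Dbox n R1 (Xc t)) -> (forall z, Dbox n R1 z -> N1 n (vget (fbar z)) <= Bf) ->
  (forall z1 z2, Dbox n R1 z1 -> Dbox n R1 z2 -> dN1 (fbar z1) (fbar z2) <= L * dN1 z1 z2) ->
  forall s h, 0 <= s -> 0 <= h -> s + h <= M ->
  N1 n (fun c => vget (Xc (s + h)) c - vget (Xc s) c - h * vget (fbar (Xc s)) c) <= INR n * (L * (INR n * Bf) * h ^ 2).
Proof.
  intros HL HD HB HLf s h Hs Hh HM. unfold N1. rewrite <- rsum_const. apply rsum_le. intros i Hi.
  destruct (Xc_mvt n fbar Xc Hode i s (s + h) Hi ltac:(lra)) as [c [Hc Hc']].
  replace (vget (Xc (s + h)) i - vget (Xc s) i - h * vget (fbar (Xc s)) i) with (h * (vget (fbar (Xc c)) i - vget (fbar (Xc s)) i))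
    by (rewrite Hc'; ring).
  rewrite Rabs_mult, (Rabs_right h) by lra.
  assert (H1 : Rabs (vget (fbar (Xc c)) i - vget (fbar (Xc s)) i) <= L * (INR n * Bf * h)).
  { eapply Rle_trans. apply (N1_coord n (fun i => vget (fbar (Xc c)) i - vget (fbar (Xc s)) i)); auto.
    eapply Rle_trans. apply HLf; apply HD; lra. apply Rmult_le_compat_l; auto.
    eapply Rle_trans. apply (Xc_lip n fbar Xc Hode M Bf R1); auto; lra.
    apply Rmult_le_compat_l. assert (0 <= Bf). { eapply Rle_trans. apply (N1_nonneg n (vget (fbar (Xc s)))). apply HB, HD. lra. }
    assert (0 <= INR n) by apply pos_INR. nra. lra. }
  assert (0 <= Bf). { eapply Rle_trans. apply (N1_nonneg n (vget (fbar (Xc s)))). apply HB, HD. lra. }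
  assert (0 <= INR n) by apply pos_INR.
  replace (L * (INR n * Bf) * h ^ 2) with (h * (L * (INR n * Bf * h))) by ring.
  apply Rmult_le_compat_l; lra.
Qed.

Definition cpt {n} (Xc : R -> vec n) (p i : nat) : vec n := Xc (INR i / INR p).

Definition Gc {n m} {Omega : Type} (f : vec n -> vec m -> vec n) (fbar : vec n -> vec n) (Xc : R -> vec n)
  (Y : nat -> Omega -> vec m) (p i N : nat) (w : Omega) : nat -> R :=
  fun c => rsum (fun j => vget (f (cpt Xc p i) (Y (S j) w)) c - vget (fbar (cpt Xc p i)) c) N.

Lemma gstep (u u' b c : R) k : 0 <= b -> 0 <= c -> u' <= (1 + b) * u + c -> u <= INR k * c * (1 + b) ^ k ->
  u' <= INR (S k) * c * (1 + b) ^ (S k).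
Proof.
  intros Hb Hc H1 H2. rewrite S_INR. simpl pow.
  assert (1 <= (1 + b) ^ k) by (apply pow_R1_Rle; lra).
  assert (0 <= INR k) by apply pos_INR.
  assert ((1 + b) * u <= (1 + b) * (INR k * c * (1 + b) ^ k)) by (apply Rmult_le_compat_l; lra).
  assert (c <= c * ((1 + b) * (1 + b) ^ k)) by (assert (1 <= (1 + b) * (1 + b) ^ k) by nra; nra).
  nra.
Qed.

Lemma Xseq_S {n m Omega} (f : vec n -> vec m -> vec n) (Y : nat -> Omega -> vec m) eps x w k c :
  vget (Xseq f Y eps x w (S k)) c = vget (Xseq f Y eps x w k) c + eps * vget (f (Xseq f Y eps x w k) (Y (S k) w)) c.
Proof. simpl. rewrite vget_vadd, vget_vscal. reflexivity. Qed.

Lemma le_div_mul e r X : 0 < X -> e <= r / X -> e * X <= r.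
Proof. intros HX H. apply (Rmult_le_compat_r X) in H; [|lra]. replace (r / X * X) with r in H by (field; lra). auto. Qed.

Lemma N1_plus4 n g1 g2 g3 g4 : N1 n (fun c => g1 c + g2 c + g3 c - g4 c) <= N1 n g1 + N1 n g2 + N1 n g3 + N1 n g4.
Proof.
  eapply Rle_trans. apply (N1_triang n (fun c => g1 c + g2 c + g3 c) (fun c => - g4 c)).
  rewrite N1_opp. assert (H1 := N1_triang n (fun c => g1 c + g2 c) g3). assert (H2 := N1_triang n g1 g2). lra.
Qed.

Lemma N1_plus3 n g1 g2 g3 : N1 n (fun c => g1 c + g2 c + g3 c) <= N1 n g1 + N1 n g2 + N1 n g3.
Proof.
  eapply Rle_trans. apply (N1_triang n (fun c => g1 c + g2 c) g3). assert (H := N1_triang n g1 g2). lra.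
Qed.

Lemma core n m (Omega : Type) (SY : vec m -> Prop) (Y : nat -> Omega -> vec m)
  (HYS : forall k w, SY (Y k w)) (f : vec n -> vec m -> vec n) (x : vec n)
  (fbar : vec n -> vec n) (Xc : R -> vec n) (Hode : ode_solution_nonneg fbar Xc) (Hx0 : Xc 0 = x)
  (M R0 L Bf : R) (HM : 0 <= M) (HR0 : 0 <= R0) (HL : 0 <= L) (HBf : 0 <= Bf)
  (HXc : forall t, 0 <= t <= M -> Dbox n R0 (Xc t))
  (Hfl : forall z1 z2 y, Dbox n (R0 + 1) z1 -> Dbox n (R0 + 1) z2 -> SY y -> dN1 (f z1 y) (f z2 y) <= L * dN1 z1 z2)
  (Hfbl : forall z1 z2, Dbox n (R0 + 1) z1 -> Dbox n (R0 + 1) z2 -> dN1 (fbar z1) (fbar z2) <= L * dN1 z1 z2)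
  (Hfb : forall z y, Dbox n (R0 + 1) z -> SY y -> N1 n (vget (f z y)) <= Bf)
  (Hfbb : forall z, Dbox n (R0 + 1) z -> N1 n (vget (fbar z)) <= Bf)
  (delta : R) (Hdelta : 0 < delta) :
  exists p : nat, (0 < p)%nat /\ exists eta, 0 < eta /\ forall C, 0 <= C -> exists e1, 0 < e1 /\ forall w,
    (forall i N, INR i <= M * INR p -> N1 n (Gc f fbar Xc Y p i N w) <= C + eta * INR N) ->
    forall eps, 0 < eps < e1 -> forall t, 0 <= t <= M -> vnorm (vsub (Xcont f Y eps x w t) (Xc t)) <= delta.
Proof.
  set (Bc := INR n * Bf). set (E := exp (L * M)). set (rho := Rmin delta 1 / 2).
  assert (Hn : 0 <= INR n) by apply pos_INR.
  assert (HBc : 0 <= Bc) by (unfold Bc; nra).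
  assert (HE : 1 <= E) by (unfold E; rewrite <- exp_0; apply exp_mono; nra).
  assert (Hrho : 0 < rho) by (unfold rho; apply Rdiv_lt_0_compat; [apply Rmin_pos; lra| lra]).
  assert (Hrho1 : rho <= delta / 2) by (unfold rho; assert (H := Rmin_l delta 1); lra).
  assert (Hrho2 : rho <= 1 / 2) by (unfold rho; assert (H := Rmin_r delta 1); lra).
  set (p := S (floorn (8 * L * Bc * M * E / rho))).
  assert (Hp : 0 < INR p) by (apply lt_0_INR; unfold p; lia).
  assert (HpB : 2 * L * Bc * M * E / INR p <= rho / 4).
  { assert (Hq : 0 <= 8 * L * Bc * M * E / rho) by (apply Rdiv_le_0_compat; [|auto]; repeat apply Rmult_le_pos; lra).
    destruct (floorn_spec _ Hq) as [_ H2]. assert (INR p = INR (floorn (8 * L * Bc * M * E / rho)) + 1) by (unfold p; rewrite S_INR; auto).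
    apply (Rmult_le_reg_r (INR p)); auto. unfold Rdiv at 1. rewrite Rmult_assoc, Rinv_l, Rmult_1_r by lra.
    assert (8 * L * Bc * M * E <= rho * INR p).
    { assert (8 * L * Bc * M * E / rho * rho = 8 * L * Bc * M * E) by (field; lra).
      assert (8 * L * Bc * M * E / rho * rho <= INR p * rho) by (apply Rmult_le_compat_r; lra). lra. }
    lra. }
  set (Kp := 2 * M * INR p + 1).
  assert (HKp : 1 <= Kp) by (unfold Kp; nra).
  set (LME := L * M * E). assert (HLME : 0 <= LME) by (unfold LME; repeat apply Rmult_le_pos; lra).
  exists p. split. unfold p; lia.
  set (eta := rho / (8 * Kp * (M + 1) * (1 + LME))).
  assert (Heta : 0 < eta) by (unfold eta; apply Rdiv_lt_0_compat; auto; repeat apply Rmult_lt_0_compat; lra).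
  exists eta. split; auto. intros C HC.
  set (e1 := Rmin (Rmin (rho / (8 * Kp * (C + 1) * (1 + LME))) (rho / (4 * (INR n * L * Bc * M * E + 1)))) (rho / (4 * (Bc + 1)))).
  assert (He1a : e1 <= rho / (8 * Kp * (C + 1) * (1 + LME))) by (unfold e1; eapply Rle_trans; [apply Rmin_l| apply Rmin_l]).
  assert (He1b : e1 <= rho / (4 * (INR n * L * Bc * M * E + 1))) by (unfold e1; eapply Rle_trans; [apply Rmin_l| apply Rmin_r]).
  assert (He1c : e1 <= rho / (4 * (Bc + 1))) by (unfold e1; apply Rmin_r).
  exists e1. split.
  { unfold e1. repeat apply Rmin_pos; apply Rdiv_lt_0_compat; auto.
    repeat apply Rmult_lt_0_compat; lra.
    assert (0 <= INR n * L * Bc * M * E) by (repeat apply Rmult_le_pos; lra). lra. lra. }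
  intros w Hw eps Heps t Ht.
  set (phi := Kp * (eps * C + eta * M)).
  assert (Hphi0 : 0 <= phi) by (unfold phi; apply Rmult_le_pos; [lra| assert (0 <= eps * C) by nra; assert (0 <= eta * M) by nra; lra]).
  assert (F2 : phi * (1 + LME) <= rho / 4).
  { unfold phi. assert (A1 : Kp * (eps * C) * (1 + LME) <= rho / 8).
    { assert (eps * (8 * Kp * (C + 1) * (1 + LME)) <= rho).
      { apply le_div_mul. repeat apply Rmult_lt_0_compat; lra. lra. }
      assert (0 <= Kp * eps * (1 + LME)) by (repeat apply Rmult_le_pos; lra). nra. }
    assert (A2 : Kp * (eta * M) * (1 + LME) <= rho / 8).
    { assert (eta * (8 * Kp * (M + 1) * (1 + LME)) = rho).
      { unfold eta. field. split; [|split]; lra. }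
      assert (0 <= Kp * eta * (1 + LME)) by (apply Rmult_le_pos; [apply Rmult_le_pos|]; lra).
      replace (Kp * (eta * M) * (1 + LME)) with (Kp * eta * (1 + LME) * M) by ring.
      assert (Kp * eta * (1 + LME) * (M + 1) * 8 = rho) by (rewrite <- H; ring). nra. }
    replace (Kp * (eps * C + eta * M) * (1 + LME)) with (Kp * (eps * C) * (1 + LME) + Kp * (eta * M) * (1 + LME)) by ring.
    lra. }
  assert (F4 : INR n * L * Bc * eps * M * E <= rho / 4).
  { assert (eps * (4 * (INR n * L * Bc * M * E + 1)) <= rho).
    { assert (0 < 4 * (INR n * L * Bc * M * E + 1)) by (assert (0 <= INR n * L * Bc * M * E) by (repeat apply Rmult_le_pos; lra); lra).
      apply le_div_mul; auto. lra. }
    assert (0 <= INR n * L * Bc * M * E) by (repeat apply Rmult_le_pos; lra). nra. }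
  assert (F5 : Bc * eps <= rho / 4).
  { assert (eps * (4 * (Bc + 1)) <= rho).
    { apply le_div_mul. lra. lra. }
    nra. }
  set (gam := L * phi + 2 * L * Bc / INR p + INR n * L * Bc * eps).
  assert (Hgam : 0 <= gam).
  { unfold gam. assert (0 <= L * phi) by nra. assert (0 <= 2 * L * Bc / INR p) by (apply Rdiv_le_0_compat; [nra|lra]).
    assert (0 <= INR n * L * Bc * eps) by (repeat apply Rmult_le_pos; lra). lra. }
  assert (Fmain : M * gam * E + phi <= 3 * rho / 4).
  { unfold gam. replace (M * (L * phi + 2 * L * Bc / INR p + INR n * L * Bc * eps) * E + phi)
      with (phi * (1 + LME) + 2 * L * Bc * M * E / INR p + INR n * L * Bc * eps * M * E) by (unfold LME; field; lra).
    lra. }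
  set (X := Xseq f Y eps x w).
  set (iota := fun j : nat => floorn (INR j * eps * INR p)).
  assert (Hiota : forall j, INR (iota j) <= INR j * eps * INR p < INR (iota j) + 1).
  { intros j. apply floorn_spec. assert (0 <= INR j) by apply pos_INR. repeat apply Rmult_le_pos; lra. }
  assert (Hiota_mon : forall j, (iota j <= iota (S j))%nat).
  { intros j. apply floorn_mono. assert (0 <= INR j) by apply pos_INR. repeat apply Rmult_le_pos; lra.
    rewrite S_INR. apply Rmult_le_compat_r; lra. }
  set (a := fun i j c => eps * (vget (f (cpt Xc p i) (Y (S j) w)) c - vget (fbar (cpt Xc p i)) c)).
  set (Phi := fun k c => rsum (fun j => a (iota j) j c) k).
  assert (HiotaM : forall j, INR j * eps <= M -> INR (iota j) <= M * INR p).
  { intros j Hj. destruct (Hiota j). apply Rle_trans with (INR j * eps * INR p); auto. apply Rmult_le_compat_r; lra. }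
  assert (HG : forall j N, INR j * eps <= M -> INR N * eps <= M ->
     N1 n (fun c => rsum (fun l => a (iota j) l c) N) <= eps * C + eta * M).
  { intros j N Hj HN. unfold a. replace (N1 n _) with (eps * N1 n (Gc f fbar Xc Y p (iota j) N w)).
    - specialize (Hw (iota j) N (HiotaM j Hj)). assert (0 <= INR N) by apply pos_INR.
      apply Rle_trans with (eps * (C + eta * INR N)). apply Rmult_le_compat_l; lra. nra.
    - transitivity (N1 n (fun c => eps * Gc f fbar Xc Y p (iota j) N w c)).
      + rewrite N1_scal, Rabs_right by lra. reflexivity.
      + apply N1_ext; intros. unfold Gc. rewrite <- rsum_scal. reflexivity. }
  assert (HPhi : forall k, INR k * eps <= M -> N1 n (Phi k) <= phi).
  { intros [|k] Hk.
    - unfold Phi. simpl. replace (N1 n (fun _ => 0)) with 0. auto. unfold N1. transitivity (rsum (fun _ => 0) n).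
      rewrite rsum_const; ring. apply rsum_ext; intros; rewrite Rabs_R0; auto.
    - assert (Hsw := switch n a iota (eps * C + eta * M) (S k) Hiota_mon).
      assert (HS : forall j N, (j < S k)%nat -> (N <= S k)%nat -> N1 n (fun c => rsum (fun l => a (iota j) l c) N) <= eps * C + eta * M).
      { intros j N Hj HN. apply HG. apply lt_INR in Hj. apply Rle_trans with (INR (S k) * eps); auto. apply Rmult_le_compat_r; lra.
        apply le_INR in HN. apply Rle_trans with (INR (S k) * eps); auto. apply Rmult_le_compat_r; lra. }
      specialize (Hsw HS k (le_n _)).
      assert (HGk := HS k (S k) ltac:(lia) (le_n _)).
      assert (Hik := HiotaM k). assert (INR k * eps <= M) by (rewrite S_INR in Hk; lra).
      specialize (Hik H).
      apply Rle_trans with (N1 n (fun c => (Phi (S k) c - rsum (fun l => a (iota k) l c) (S k)) + rsum (fun l => a (iota k) l c) (S k))).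
      { right. apply N1_ext; intros; ring. }
      eapply Rle_trans. apply N1_triang. unfold Phi.
      assert (HS0 : 0 <= eps * C + eta * M) by (eapply Rle_trans; [apply N1_nonneg|apply HGk]).
      unfold phi. assert (2 * INR (iota k) * (eps * C + eta * M) <= 2 * M * INR p * (eps * C + eta * M)) by nra.
      unfold Kp. lra. }
  set (e := fun k c => vget (X k) c - vget (Xc (INR k * eps)) c - Phi k c).
  assert (Hbox : forall s, 0 <= s <= M -> Dbox n (R0 + 1) (Xc s)).
  { intros s Hs. apply Dbox_mono with R0; [lra| apply HXc; auto]. }
  assert (Hlip := Xc_lip n fbar Xc Hode M Bf (R0 + 1) Hbox Hfbb). fold Bc in Hlip.
  assert (Hloc := Xc_loc n fbar Xc Hode M Bf (R0 + 1) L HL Hbox Hfbb Hfbl). fold Bc in Hloc.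
  assert (HEk : forall k, INR k * eps <= M -> (1 + eps * L) ^ k <= E).
  { intros k Hk. eapply Rle_trans. apply pow_exp_bound. nra. unfold E. apply exp_mono.
    replace (eps * L * INR k) with (L * (INR k * eps)) by ring. apply Rmult_le_compat_l; lra. }
  assert (Hgr : forall k, INR k * eps <= M -> N1 n (e k) <= INR k * (eps * gam) * (1 + eps * L) ^ k).
  { induction k; intros Hk.
    - simpl. replace (N1 n (e 0%nat)) with 0. lra.
      unfold N1. transitivity (rsum (fun _ => 0) n). rewrite rsum_const; ring. apply rsum_ext; intros.
      unfold e, Phi. simpl. rewrite Rmult_0_l, Hx0. unfold X. simpl. replace (vget x i - vget x i - 0) with 0 by ring.
      rewrite Rabs_R0; auto.
    - assert (Hk' : INR k * eps <= M) by (rewrite S_INR in Hk; lra).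
      specialize (IHk Hk').
      set (s := INR k * eps).
      assert (Hs0 : 0 <= s) by (unfold s; assert (0 <= INR k) by apply pos_INR; nra).
      assert (HsM : s <= M) by (unfold s; lra).
      assert (HseM : s + eps <= M) by (unfold s; rewrite S_INR in Hk; lra).
      assert (HBk : N1 n (e k) <= M * gam * E).
      { eapply Rle_trans. apply IHk. specialize (HEk k Hk').
        assert (0 <= (1 + eps * L) ^ k) by (apply pow_le; nra).
        replace (INR k * (eps * gam) * (1 + eps * L) ^ k) with (s * gam * (1 + eps * L) ^ k) by (unfold s; ring).
        apply Rmult_le_compat; [apply Rmult_le_pos; lra | lra | apply Rmult_le_compat_r; lra | lra]. }
      assert (HXk : dN1 (X k) (Xc s) <= 3 * rho / 4).
      { unfold dN1. replace (N1 n (fun c => vget (X k) c - vget (Xc s) c)) with (N1 n (fun c => e k c + Phi k c)).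
        eapply Rle_trans. apply N1_triang. assert (HP := HPhi k Hk'). lra.
        apply N1_ext; intros. unfold e. fold s. ring. }
      assert (HDk : Dbox n (R0 + 1) (X k)) by (apply Dbox_near with (Xc s); [apply HXc; lra| lra]).
      apply gstep with (N1 n (e k)); auto. nra. nra.
      set (tau := INR (iota k) / INR p).
      assert (Htau : 0 <= tau <= s /\ s - tau <= / INR p).
      { destruct (Hiota k) as [H1 H2]. unfold tau, s. split; [split|].
        apply Rdiv_le_0_compat; [apply pos_INR|lra].
        apply (Rmult_le_reg_r (INR p)); auto. unfold Rdiv. rewrite Rmult_assoc, Rinv_l, Rmult_1_r by lra. lra.
        apply (Rmult_le_reg_r (INR p)); auto. rewrite Rmult_minus_distr_r. unfold Rdiv. rewrite !Rmult_assoc, Rinv_l, Rmult_1_r by lra.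
        lra. }
      set (cp := cpt Xc p (iota k)).
      assert (Hcp : cp = Xc tau) by reflexivity.
      assert (HDcp : Dbox n (R0 + 1) cp) by (rewrite Hcp; apply Hbox; lra).
      assert (Hd1 : dN1 (Xc s) cp <= Bc / INR p).
      { rewrite Hcp. eapply Rle_trans. apply Hlip; lra. unfold Rdiv. apply Rmult_le_compat_l; lra. }
      set (yk := Y (S k) w).
      assert (E1 : forall c, e (S k) c = e k c + eps * (vget (f (X k) yk) c - vget (f cp yk) c)
            + eps * (vget (fbar cp) c - vget (fbar (Xc s)) c)
            - (vget (Xc (s + eps)) c - vget (Xc s) c - eps * vget (fbar (Xc s)) c)).
      { intros c. unfold e. replace (INR (S k) * eps) with (s + eps) by (unfold s; rewrite S_INR; ring).
        unfold X. rewrite Xseq_S. fold X. unfold Phi. simpl rsum. unfold a. fold cp. fold yk. fold s. ring. }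
      rewrite (N1_ext _ _ _ (fun c _ => E1 c)). eapply Rle_trans. apply N1_plus4.
      assert (HA : N1 n (fun c => eps * (vget (f (X k) yk) c - vget (f cp yk) c)) <= eps * L * (dN1 (X k) (Xc s) + Bc / INR p)).
      { rewrite N1_scal, Rabs_right by lra. rewrite Rmult_assoc. apply Rmult_le_compat_l. lra.
        eapply Rle_trans. apply Hfl; [auto|auto|apply HYS]. apply Rmult_le_compat_l; auto.
        eapply Rle_trans. apply (dN1_triang _ (Xc s)). lra. }
      assert (HB : N1 n (fun c => eps * (vget (fbar cp) c - vget (fbar (Xc s)) c)) <= eps * L * (Bc / INR p)).
      { rewrite N1_scal, Rabs_right by lra. rewrite Rmult_assoc. apply Rmult_le_compat_l. lra.
        eapply Rle_trans. { apply Hfbl. auto. apply Hbox; lra. } apply Rmult_le_compat_l; auto. rewrite dN1_sym. auto. }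
      assert (HCc : N1 n (fun c => vget (Xc (s + eps)) c - vget (Xc s) c - eps * vget (fbar (Xc s)) c) <= INR n * (L * Bc * eps ^ 2)).
      { apply Hloc; lra. }
      assert (Hd2 : dN1 (X k) (Xc s) <= N1 n (e k) + phi).
      { unfold dN1. replace (N1 n (fun c => vget (X k) c - vget (Xc s) c)) with (N1 n (fun c => e k c + Phi k c)).
        eapply Rle_trans. apply N1_triang. assert (HP := HPhi k Hk'). lra.
        apply N1_ext; intros. unfold e. fold s. ring. }
      unfold gam.
      assert (Hepsp : eps * L * (Bc / INR p) = eps * (L * Bc / INR p)) by (field; lra).
      assert (Hmain : eps * L * (dN1 (X k) (Xc s) + Bc / INR p) <= eps * L * N1 n (e k) + eps * L * phi + eps * (L * Bc / INR p)).
      { assert (0 <= eps * L) by nra. nra. }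
      replace (eps * (L * phi + 2 * L * Bc / INR p + INR n * L * Bc * eps)) with
        (eps * L * phi + 2 * (eps * (L * Bc / INR p)) + INR n * (L * Bc * eps ^ 2)) by (field; lra).
      lra. }
  set (k := floorn (t / eps)).
  assert (Hk : INR k <= t / eps < INR k + 1) by (apply floorn_spec; apply Rdiv_le_0_compat; lra).
  assert (Hks : INR k * eps <= t < INR k * eps + eps).
  { destruct Hk as [H1 H2]. split.
    apply (Rmult_le_compat_r eps) in H1; [|lra]. replace (t / eps * eps) with t in H1 by (field; lra). auto.
    apply (Rmult_lt_compat_r eps) in H2; [|lra]. replace (t / eps * eps) with t in H2 by (field; lra). lra. }
  assert (HkM : INR k * eps <= M) by lra.
  assert (Hs0 : 0 <= INR k * eps) by (assert (0 <= INR k) by apply pos_INR; nra).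
  replace (Xcont f Y eps x w t) with (X k) by reflexivity.
  eapply Rle_trans. apply vnorm_le_dN1. eapply Rle_trans. apply (dN1_triang _ (Xc (INR k * eps))).
  assert (HBk : N1 n (e k) <= M * gam * E).
  { eapply Rle_trans. apply Hgr; auto. specialize (HEk k HkM).
    assert (0 <= (1 + eps * L) ^ k) by (apply pow_le; nra).
    replace (INR k * (eps * gam) * (1 + eps * L) ^ k) with ((INR k * eps) * gam * (1 + eps * L) ^ k) by ring.
    apply Rmult_le_compat; [nra|auto|apply Rmult_le_compat_r; lra|auto]. }
  assert (HXk : dN1 (X k) (Xc (INR k * eps)) <= 3 * rho / 4).
  { unfold dN1. replace (N1 n (fun c => vget (X k) c - vget (Xc (INR k * eps)) c)) with (N1 n (fun c => e k c + Phi k c)).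
    eapply Rle_trans. apply N1_triang. assert (HP := HPhi k HkM). lra.
    apply N1_ext; intros. unfold e. ring. }
  assert (Hlast : dN1 (Xc (INR k * eps)) (Xc t) <= Bc * eps).
  { rewrite dN1_sym. eapply Rle_trans. apply Hlip; lra. apply Rmult_le_compat_l; lra. }
  lra.
Qed.

Lemma vnorm_vadd_sub {n} (u' u a' a : vec n) : vnorm (vsub (vadd u' a') (vadd u a)) <= vnorm (vsub u' u) + vnorm (vsub a' a).
Proof.
  rewrite !vnorm_E2. eapply Rle_trans; [|apply E2_triang]. right. apply E2_ext. intros i _.
  rewrite !vget_vsub, !vget_vadd. ring.
Qed.

Lemma jc_add {n m} (h : vec n -> vec m -> vec n) :
  (forall u y e, 0 < e -> exists d, 0 < d /\ forall u' y', vnorm (vsub u' u) < d -> vnorm (vsub y' y) < d -> vnorm (vsub (h u' y') (h u y)) < e) ->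
  jointly_continuous (fun u y => vadd u (h u y)).
Proof.
  intros Hh u y e He. destruct (Hh u y (e / 2)) as [d [Hd Hd']]. lra.
  exists (Rmin d (e / 2)). split. apply Rmin_pos; lra.
  intros u' y' Hu Hy. eapply Rle_lt_trans. apply vnorm_vadd_sub.
  assert (vnorm (vsub u' u) < e / 2) by (eapply Rlt_le_trans; [apply Hu| apply Rmin_r]).
  assert (vnorm (vsub (h u' y') (h u y)) < e / 2).
  { apply Hd'. eapply Rlt_le_trans; [apply Hu| apply Rmin_l]. eapply Rlt_le_trans; [apply Hy| apply Rmin_l]. }
  lra.
Qed.

Lemma jc_step {n m} (f : vec n -> vec m -> vec n) (eps : R) : jointly_continuous f ->
  jointly_continuous (fun u y => vadd u (vscal eps (f u y))).
Proof.
  intros Hf. apply jc_add. intros u y e He.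
  destruct (Hf u y (e / (Rabs eps + 1))) as [d [Hd Hd']].
  { apply Rdiv_lt_0_compat; auto. assert (0 <= Rabs eps) by apply Rabs_pos. lra. }
  exists d. split; auto. intros u' y' Hu Hy.
  replace (vnorm (vsub (vscal eps (f u' y')) (vscal eps (f u y)))) with (Rabs eps * vnorm (vsub (f u' y') (f u y))).
  - specialize (Hd' u' y' Hu Hy). assert (0 <= Rabs eps) by apply Rabs_pos.
    assert (0 <= vnorm (vsub (f u' y') (f u y))) by apply sqrt_pos.
    assert (Rabs eps * vnorm (vsub (f u' y') (f u y)) <= Rabs eps * (e / (Rabs eps + 1))) by (apply Rmult_le_compat_l; lra).
    assert (Rabs eps * (e / (Rabs eps + 1)) < e).
    { apply (Rmult_lt_reg_r (Rabs eps + 1)). lra. field_simplify; lra. }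
    lra.
  - rewrite !vnorm_E2. rewrite <- E2_scal. apply E2_ext. intros; rewrite !vget_vsub, !vget_vscal. ring.
Qed.

Lemma jc_G {n m} (f : vec n -> vec m -> vec n) (cp fc : vec n) : jointly_continuous f ->
  jointly_continuous (fun u y => vadd u (vsub (f cp y) fc)).
Proof.
  intros Hf. apply jc_add. intros u y e He.
  destruct (Hf cp y e He) as [d [Hd Hd']]. exists d. split; auto. intros u' y' Hu Hy.
  replace (vnorm (vsub (vsub (f cp y') fc) (vsub (f cp y) fc))) with (vnorm (vsub (f cp y') (f cp y))).
  apply Hd'; auto. replace (vnorm (vsub cp cp)) with 0. auto.
  rewrite vnorm_E2. unfold E2. rewrite <- sqrt_0. f_equal. transitivity (rsum (fun _ => 0) n).
  rewrite rsum_const; ring. apply rsum_ext; intros. rewrite vget_vsub. ring.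
  rewrite !vnorm_E2. apply E2_ext; intros. rewrite !vget_vsub. ring.
Qed.

Lemma rv_Xseq {n m Omega} (F : (Omega -> Prop) -> Prop) (HF : is_sigma_algebra F) (f : vec n -> vec m -> vec n)
  (Y : nat -> Omega -> vec m) eps x : jointly_continuous f -> (forall k, random_vec F (Y k)) ->
  forall k, random_vec F (fun w => Xseq f Y eps x w k).
Proof.
  intros Hf HY k. induction k.
  - change (random_vec F (fun _ : Omega => x)). apply rv_const; auto.
  - change (random_vec F (fun w => (fun u y => vadd u (vscal eps (f u y))) (Xseq f Y eps x w k) (Y (S k) w))).
    apply rv_comp; auto. apply jc_step; auto.
Qed.

Fixpoint Gv {n m Omega} (f : vec n -> vec m -> vec n) (cp fc : vec n) (Y : nat -> Omega -> vec m) (N : nat) (w : Omega) : vec n :=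
  match N with
  | O => mkvec n (fun _ => 0)
  | S N' => vadd (Gv f cp fc Y N' w) (vsub (f cp (Y (S N') w)) fc)
  end.

Lemma rv_Gv {n m Omega} (F : (Omega -> Prop) -> Prop) (HF : is_sigma_algebra F) (f : vec n -> vec m -> vec n)
  (Y : nat -> Omega -> vec m) cp fc : jointly_continuous f -> (forall k, random_vec F (Y k)) ->
  forall N, random_vec F (Gv f cp fc Y N).
Proof.
  intros Hf HY N. induction N.
  - change (random_vec F (fun _ : Omega => mkvec n (fun _ => 0))). apply rv_const; auto.
  - change (random_vec F (fun w => (fun u y => vadd u (vsub (f cp y) fc)) (Gv f cp fc Y N w) (Y (S N) w))).
    apply rv_comp; auto. apply jc_G; auto.
Qed.

Lemma Gv_Gc {n m Omega} (f : vec n -> vec m -> vec n) fbar Xc (Y : nat -> Omega -> vec m) p i N w c : (c < n)%nat ->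
  vget (Gv f (cpt Xc p i) (fbar (cpt Xc p i)) Y N w) c = Gc f fbar Xc Y p i N w c.
Proof.
  intros Hc. induction N; simpl.
  - apply vget_mkvec; auto.
  - rewrite vget_vadd, vget_vsub, IHN. unfold Gc. simpl. reflexivity.
Qed.

Lemma F_imp {Omega} (F : (Omega -> Prop) -> Prop) (Q : Prop) A : is_sigma_algebra F -> (Q -> F A) -> F (fun w => Q -> A w).
Proof.
  intros HF H. destruct (classic Q).
  - apply (F_ext F A); auto. intros w; tauto.
  - apply (F_ext F (fun _ => True)). apply F_True; auto. intros w; tauto.
Qed.

Lemma F_Gc_le {n m Omega} (F : (Omega -> Prop) -> Prop) (HF : is_sigma_algebra F) (f : vec n -> vec m -> vec n) fbar Xc
  (Y : nat -> Omega -> vec m) p i N (b : R) : jointly_continuous f -> (forall k, random_vec F (Y k)) ->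
  F (fun w => N1 n (Gc f fbar Xc Y p i N w) <= b).
Proof.
  intros Hf HY.
  apply (F_ext F (fun w => ~ (fun v : vec n => N1 n (vget v) > b) (Gv f (cpt Xc p i) (fbar (cpt Xc p i)) Y N w))).
  - apply F_compl; auto. apply (rv_Gv F HF f Y (cpt Xc p i) (fbar (cpt Xc p i)) Hf HY N (fun v : vec n => N1 n (vget v) > b)).
    apply open_gt_N1.
  - intros w. rewrite (N1_ext n (vget (Gv f (cpt Xc p i) (fbar (cpt Xc p i)) Y N w)) (Gc f fbar Xc Y p i N w)).
    split; intros; lra. intros; apply Gv_Gc; auto.
Qed.

Lemma F_Ebad {n m Omega} (F : (Omega -> Prop) -> Prop) (HF : is_sigma_algebra F) (f : vec n -> vec m -> vec n)
  (Y : nat -> Omega -> vec m) (x : vec n) (Xc : R -> vec n) eps T delta : jointly_continuous f -> (forall k, random_vec F (Y k)) ->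
  F (fun w => exists t, 0 <= t <= T /\ vnorm (vsub (Xcont f Y eps x w t) (Xc t)) > delta).
Proof.
  intros Hf HY.
  apply (F_ext F (fun w => exists k, (fun v => exists t, (0 <= t <= T /\ floorn (t / eps) = k) /\ vnorm (vsub v (Xc t)) > delta)
     (Xseq f Y eps x w k))).
  - apply F_union; auto. intros k.
    apply (rv_Xseq F HF f Y eps x Hf HY k (fun v => exists t, (0 <= t <= T /\ floorn (t / eps) = k) /\ vnorm (vsub v (Xc t)) > delta)).
    apply (open_union R (fun t v => (0 <= t <= T /\ floorn (t / eps) = k) /\ vnorm (vsub v (Xc t)) > delta)).
    intros t. apply open_and_const. apply open_gt_vnorm.
  - intros w. split.
    + intros [k [t [[Ht Hk] Hd]]]. exists t. split; auto. unfold Xcont. subst k. apply Hd.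
    + intros [t [Ht Hd]]. exists (floorn (t / eps)), t. split; auto.
Qed.

Definition avg {n m Omega} (f : vec n -> vec m -> vec n) (Y : nat -> Omega -> vec m) (w : Omega) (z : vec n) (N : nat) : vec n :=
  vscal (/ INR (N + 1)) (vsum (fun k => f z (Y (S k) w)) N).

Lemma avg_coord {n m Omega} (f : vec n -> vec m -> vec n) (Y : nat -> Omega -> vec m) w z N c :
  vget (avg f Y w z N) c = / INR (N + 1) * rsum (fun k => vget (f z (Y (S k) w)) c) (S N).
Proof. unfold avg. rewrite vget_vscal, vget_vsum. reflexivity. Qed.

Lemma INR_Np1_pos N : 0 < INR (N + 1).
Proof. apply lt_0_INR. lia. Qed.

Lemma dN1_le_vnorm {n} (a b : vec n) : dN1 a b <= INR n * vnorm (vsub a b).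
Proof. unfold dN1. rewrite vnorm_E2. eapply Rle_trans. apply N1_le_E2. right. f_equal. apply E2_ext; intros; rewrite vget_vsub; auto. Qed.

Lemma avg_lip {n m Omega} (f : vec n -> vec m -> vec n) (Y : nat -> Omega -> vec m) w (SY : vec m -> Prop) L
  (HYS : forall k, SY (Y k w)) z1 z2 :
  (forall y, SY y -> dN1 (f z1 y) (f z2 y) <= L * dN1 z1 z2) -> forall N, dN1 (avg f Y w z1 N) (avg f Y w z2 N) <= L * dN1 z1 z2.
Proof.
  intros Hl N. unfold dN1 at 1.
  rewrite (N1_ext n _ (fun c => / INR (N + 1) * rsum (fun k => vget (f z1 (Y (S k) w)) c - vget (f z2 (Y (S k) w)) c) (S N))).
  - rewrite N1_scal, Rabs_right by (left; apply Rinv_0_lt_compat, INR_Np1_pos).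
    eapply Rle_trans. apply Rmult_le_compat_l. left; apply Rinv_0_lt_compat, INR_Np1_pos.
    apply (N1_rsum n (fun k c => vget (f z1 (Y (S k) w)) c - vget (f z2 (Y (S k) w)) c)).
    eapply Rle_trans. apply Rmult_le_compat_l. left; apply Rinv_0_lt_compat, INR_Np1_pos.
    apply (rsum_le _ (fun _ => L * dN1 z1 z2)). intros; apply Hl; auto.
    rewrite rsum_const. replace (S N) with (N + 1)%nat by lia. right. field. apply not_0_INR. lia.
  - intros c _. rewrite !avg_coord, rsum_minus. ring.
Qed.

Lemma avg_bnd {n m Omega} (f : vec n -> vec m -> vec n) (Y : nat -> Omega -> vec m) w (SY : vec m -> Prop) B
  (HYS : forall k, SY (Y k w)) z :
  (forall y, SY y -> N1 n (vget (f z y)) <= B) -> forall N, N1 n (vget (avg f Y w z N)) <= B.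
Proof.
  intros Hl N.
  rewrite (N1_ext n _ (fun c => / INR (N + 1) * rsum (fun k => vget (f z (Y (S k) w)) c) (S N))).
  - rewrite N1_scal, Rabs_right by (left; apply Rinv_0_lt_compat, INR_Np1_pos).
    eapply Rle_trans. apply Rmult_le_compat_l. left; apply Rinv_0_lt_compat, INR_Np1_pos.
    apply (N1_rsum n (fun k c => vget (f z (Y (S k) w)) c)).
    eapply Rle_trans. apply Rmult_le_compat_l. left; apply Rinv_0_lt_compat, INR_Np1_pos.
    apply (rsum_le _ (fun _ => B)). intros; apply Hl; auto.
    rewrite rsum_const. replace (S N) with (N + 1)%nat by lia. right. field. apply not_0_INR. lia.
  - intros c _. rewrite !avg_coord. auto.
Qed.

Lemma cv_dN1 {n m Omega} (f : vec n -> vec m -> vec n) (Y : nat -> Omega -> vec m) w z l :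
  vec_cv (fun N => vscal (/ INR (N + 1)) (vsum (fun k => f z (Y (S k) w)) N)) l ->
  forall e, 0 < e -> exists N0, forall N, (N0 <= N)%nat -> dN1 (avg f Y w z N) l <= e.
Proof.
  intros Hc e He. destruct (Hc (e / (INR n + 1))) as [N0 HN0].
  { assert (0 <= INR n) by apply pos_INR. apply Rdiv_lt_0_compat; lra. }
  exists N0. intros N HN. eapply Rle_trans. apply dN1_le_vnorm. specialize (HN0 N HN).
  assert (0 <= INR n) by apply pos_INR. unfold avg.
  assert (INR n * vnorm (vsub (vscal (/ INR (N + 1)) (vsum (fun k => f z (Y (S k) w)) N)) l) <= INR n * (e / (INR n + 1))) by (apply Rmult_le_compat_l; lra).
  assert (INR n * (e / (INR n + 1)) <= e). { apply (Rmult_le_reg_r (INR n + 1)). lra. field_simplify; lra. }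
  lra.
Qed.

Lemma fbar_lip {n m Omega} (f : vec n -> vec m -> vec n) (fbar : vec n -> vec n) (Y : nat -> Omega -> vec m) w (SY : vec m -> Prop) L
  (HYS : forall k, SY (Y k w)) z1 z2 :
  vec_cv (fun N => vscal (/ INR (N + 1)) (vsum (fun k => f z1 (Y (S k) w)) N)) (fbar z1) ->
  vec_cv (fun N => vscal (/ INR (N + 1)) (vsum (fun k => f z2 (Y (S k) w)) N)) (fbar z2) ->
  (forall y, SY y -> dN1 (f z1 y) (f z2 y) <= L * dN1 z1 z2) -> dN1 (fbar z1) (fbar z2) <= L * dN1 z1 z2.
Proof.
  intros H1 H2 Hl. apply Rle_plus_epsilon. intros e He.
  destruct (cv_dN1 f Y w z1 _ H1 (e / 2)) as [N1' HN1]. lra.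
  destruct (cv_dN1 f Y w z2 _ H2 (e / 2)) as [N2' HN2]. lra.
  set (N := (N1' + N2')%nat). specialize (HN1 N ltac:(unfold N; lia)). specialize (HN2 N ltac:(unfold N; lia)).
  assert (Ha := avg_lip f Y w SY L HYS z1 z2 Hl N).
  eapply Rle_trans. apply (dN1_triang _ (avg f Y w z1 N)). rewrite dN1_sym.
  eapply Rle_trans. apply Rplus_le_compat_l. apply (dN1_triang _ (avg f Y w z2 N)). lra.
Qed.

Lemma fbar_bnd {n m Omega} (f : vec n -> vec m -> vec n) (fbar : vec n -> vec n) (Y : nat -> Omega -> vec m) w (SY : vec m -> Prop) B
  (HYS : forall k, SY (Y k w)) z :
  vec_cv (fun N => vscal (/ INR (N + 1)) (vsum (fun k => f z (Y (S k) w)) N)) (fbar z) ->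
  (forall y, SY y -> N1 n (vget (f z y)) <= B) -> N1 n (vget (fbar z)) <= B.
Proof.
  intros H1 Hl. apply Rle_plus_epsilon. intros e He.
  destruct (cv_dN1 f Y w z _ H1 e He) as [N0 HN0]. specialize (HN0 N0 (le_n _)).
  assert (Ha := avg_bnd f Y w SY B HYS z Hl N0).
  assert (Ht := N1_triang_sub n (vget (fbar z)) (vget (avg f Y w z N0)) (fun _ => 0)). cbv beta in Ht.
  rewrite (N1_ext n (fun i => vget (fbar z) i - 0) (vget (fbar z))) in Ht by (intros; ring).
  rewrite (N1_ext n (fun i => vget (avg f Y w z N0) i - 0) (vget (avg f Y w z N0))) in Ht by (intros; ring).
  rewrite dN1_sym in HN0. unfold dN1 in HN0. lra.
Qed.

Lemma consts (n m : nat) (Omega : Type)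
  (F : (Omega -> Prop) -> Prop) (P : (Omega -> Prop) -> R)
  (HP : is_probability F P)
  (SY : vec m -> Prop) (Y : nat -> Omega -> vec m)
  (HYS : forall k w, SY (Y k w))
  (f : vec n -> vec m -> vec n)
  (fbar : vec n -> vec n) (Xc : R -> vec n)
  (A1_bdd : forall z, exists B, forall y, SY y -> vnorm (f z y) <= B)
  (A1_lip : forall D : vec n -> Prop, is_compact D ->
     exists kD, forall x1 x2 y, D x1 -> D x2 -> SY y ->
       vnorm (vsub (f x1 y) (f x2 y)) <= kD * vnorm (vsub x1 x2))
  (A2 : forall z, almost_surely F P (fun w =>
     vec_cv (fun N => vscal (/ INR (N + 1)) (vsum (fun k => f z (Y (S k) w)) N))
            (fbar z)))
  (A3_ode : ode_solution_nonneg fbar Xc) (M : R) (HM : 0 <= M) :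
  exists R0 L Bf, 0 <= R0 /\ 0 <= L /\ 0 <= Bf /\
  (forall t, 0 <= t <= M -> Dbox n R0 (Xc t)) /\
  (forall z1 z2 y, Dbox n (R0 + 1) z1 -> Dbox n (R0 + 1) z2 -> SY y -> dN1 (f z1 y) (f z2 y) <= L * dN1 z1 z2) /\
  (forall z1 z2, Dbox n (R0 + 1) z1 -> Dbox n (R0 + 1) z2 -> dN1 (fbar z1) (fbar z2) <= L * dN1 z1 z2) /\
  (forall z y, Dbox n (R0 + 1) z -> SY y -> N1 n (vget (f z y)) <= Bf) /\
  (forall z, Dbox n (R0 + 1) z -> N1 n (vget (fbar z)) <= Bf).
Proof.
  destruct (Xc_bounded n fbar Xc A3_ode M HM) as [R0 [HR0 HXc]].
  destruct (A1_lip (Dbox n (R0 + 1))) as [kD HkD]. { apply box_compact. lra. }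
  set (L := INR n * Rmax kD 0).
  assert (Hn : 0 <= INR n) by apply pos_INR.
  assert (HL : 0 <= L) by (unfold L; apply Rmult_le_pos; auto; apply Rmax_r).
  assert (Hfl : forall z1 z2 y, Dbox n (R0 + 1) z1 -> Dbox n (R0 + 1) z2 -> SY y -> dN1 (f z1 y) (f z2 y) <= L * dN1 z1 z2).
  { intros z1 z2 y H1 H2 Hy. eapply Rle_trans. apply dN1_le_vnorm. unfold L. rewrite Rmult_assoc.
    apply Rmult_le_compat_l; auto. eapply Rle_trans. apply HkD; auto.
    assert (0 <= vnorm (vsub z1 z2)) by apply sqrt_pos. assert (Hvd := vnorm_le_dN1 z1 z2).
    assert (kD <= Rmax kD 0) by apply Rmax_l. assert (0 <= Rmax kD 0) by apply Rmax_r.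
    apply Rle_trans with (Rmax kD 0 * vnorm (vsub z1 z2)). apply Rmult_le_compat_r; auto.
    apply Rmult_le_compat_l; auto. }
  set (z0 := mkvec n (fun _ => 0)).
  assert (Hz0 : Dbox n (R0 + 1) z0). { intros i Hi. unfold z0. rewrite vget_mkvec, Rabs_R0 by auto. lra. }
  destruct (A1_bdd z0) as [B0 HB0].
  set (Bf := INR n * Rmax B0 0 + L * (INR n * (R0 + 1))).
  assert (HBf : 0 <= Bf) by (unfold Bf; assert (0 <= Rmax B0 0) by apply Rmax_r; assert (0 <= L * (INR n * (R0 + 1))) by (apply Rmult_le_pos; nra); nra).
  assert (Hfb : forall z y, Dbox n (R0 + 1) z -> SY y -> N1 n (vget (f z y)) <= Bf).
  { intros z y Hz Hy.
    assert (Ht := N1_triang_sub n (vget (f z y)) (vget (f z0 y)) (fun _ => 0)). cbv beta in Ht.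
    rewrite (N1_ext n (fun i => vget (f z y) i - 0) (vget (f z y))) in Ht by (intros; ring).
    rewrite (N1_ext n (fun i => vget (f z0 y) i - 0) (vget (f z0 y))) in Ht by (intros; ring).
    assert (H1 := Hfl z z0 y Hz Hz0 Hy). unfold dN1 in H1.
    assert (H2 : N1 n (vget (f z0 y)) <= INR n * Rmax B0 0).
    { eapply Rle_trans. apply N1_le_E2. apply Rmult_le_compat_l; auto. rewrite <- vnorm_E2.
      eapply Rle_trans. apply HB0; auto. apply Rmax_l. }
    assert (H3 : dN1 z z0 <= INR n * (R0 + 1)).
    { unfold dN1, N1. rewrite <- rsum_const. apply rsum_le. intros i Hi. unfold z0. rewrite vget_mkvec by auto.
      rewrite Rminus_0_r. apply Hz; auto. }
    unfold dN1 in H3. assert (L * N1 n (fun c => vget z c - vget z0 c) <= L * (INR n * (R0 + 1))) by (apply Rmult_le_compat_l; auto).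
    unfold Bf. lra. }
  exists R0, L, Bf. refine (conj HR0 (conj HL (conj HBf (conj _ (conj Hfl (conj _ (conj Hfb _))))))).
  { intros t Ht i Hi. assert (H := HXc t Ht i Hi). lra. }
  - intros z1 z2 H1 H2.
    assert (Has : almost_surely F P (fun w => forall k : nat, (fun k w => vec_cv (fun N => vscal (/ INR (N + 1)) (vsum (fun j => f (match k with O => z1 | _ => z2 end) (Y (S j) w)) N)) (fbar (match k with O => z1 | _ => z2 end))) k w)).
    { apply as_forall; auto. }
    destruct (as_nonempty F P _ HP Has) as [w Hw].
    apply (fbar_lip f fbar Y w SY L (fun k => HYS k w) z1 z2 (Hw 0%nat) (Hw 1%nat)). intros; apply Hfl; auto.
  - intros z Hz. destruct (as_nonempty F P _ HP (A2 z)) as [w Hw].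
    apply (fbar_bnd f fbar Y w SY Bf (fun k => HYS k w) z Hw). intros; apply Hfb; auto.
Qed.

Lemma G_bound {n m Omega} (f : vec n -> vec m -> vec n) (fbar : vec n -> vec n) (Y : nat -> Omega -> vec m) w
  (SY : vec m -> Prop) (HYS : forall k, SY (Y k w)) cp Bf
  (Hfb : forall y, SY y -> N1 n (vget (f cp y)) <= Bf) (Hfbb : N1 n (vget (fbar cp)) <= Bf)
  (Hcv : vec_cv (fun N => vscal (/ INR (N + 1)) (vsum (fun k => f cp (Y (S k) w)) N)) (fbar cp)) :
  forall eta, 0 < eta -> exists C, 0 <= C /\ forall N,
    N1 n (fun c => rsum (fun j => vget (f cp (Y (S j) w)) c - vget (fbar cp) c) N) <= C + eta * INR N.
Proof.
  intros eta Heta. destruct (cv_dN1 f Y w cp _ Hcv eta Heta) as [N0 HN0].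
  assert (HBf : 0 <= Bf) by (eapply Rle_trans; [apply N1_nonneg| apply Hfbb]).
  exists (2 * Bf * INR N0). split. assert (0 <= INR N0) by apply pos_INR. nra.
  intros N.
  assert (Hsmall : N1 n (fun c => rsum (fun j => vget (f cp (Y (S j) w)) c - vget (fbar cp) c) N) <= 2 * Bf * INR N).
  { eapply Rle_trans. apply (N1_rsum n (fun j c => vget (f cp (Y (S j) w)) c - vget (fbar cp) c)).
    replace (2 * Bf * INR N) with (INR N * (2 * Bf)) by ring. rewrite <- rsum_const. apply rsum_le. intros j _.
    eapply Rle_trans. apply (N1_triang_sub n _ (fun _ => 0)). cbv beta.
    rewrite (N1_ext n (fun i => vget (f cp (Y (S j) w)) i - 0) (vget (f cp (Y (S j) w)))) by (intros; ring).
    rewrite (N1_ext n (fun i => 0 - vget (fbar cp) i) (fun i => - vget (fbar cp) i)) by (intros; ring).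
    rewrite N1_opp. assert (H := Hfb (Y (S j) w) (HYS _)). lra. }
  destruct (le_lt_dec N N0) as [Hle|Hlt].
  - eapply Rle_trans. apply Hsmall. apply le_INR in Hle. assert (0 <= INR N) by apply pos_INR. nra.
  - destruct N as [|N]; [lia|]. specialize (HN0 N ltac:(lia)).
    rewrite (N1_ext n _ (fun c => INR (N + 1) * (vget (avg f Y w cp N) c - vget (fbar cp) c))).
    + rewrite N1_scal, Rabs_right by (left; apply INR_Np1_pos). unfold dN1 in HN0.
      assert (0 <= INR N0) by apply pos_INR. assert (0 <= Bf * INR N0) by nra.
      replace (INR (S N)) with (INR (N + 1)) by (f_equal; lia).
      assert (HNp := INR_Np1_pos N).
      assert (INR (N + 1) * N1 n (fun c => vget (avg f Y w cp N) c - vget (fbar cp) c) <= INR (N + 1) * eta) by (apply Rmult_le_compat_l; lra).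
      lra.
    + intros c _. rewrite avg_coord. rewrite rsum_minus, rsum_const.
      replace (S N) with (N + 1)%nat by lia. field. apply not_0_INR. lia.
Qed.

Lemma fin_unif (Pr : nat -> R -> Prop) : (forall i C C', C <= C' -> Pr i C -> Pr i C') ->
  forall I, (forall i, (i <= I)%nat -> exists C, 0 <= C /\ Pr i C) -> exists C, 0 <= C /\ forall i, (i <= I)%nat -> Pr i C.
Proof.
  intros Hmon I. induction I; intros H.
  - destruct (H 0%nat (le_n _)) as [C [HC HP]]. exists C. split; auto. intros i Hi. replace i with 0%nat by lia. auto.
  - destruct IHI as [C1 [HC1 HP1]]. intros; apply H; lia.
    destruct (H (S I) (le_n _)) as [C2 [HC2 HP2]]. exists (Rmax C1 C2). split. eapply Rle_trans; [apply HC1| apply Rmax_l].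
    intros i Hi. destruct (Nat.eq_dec i (S I)). subst. eapply Hmon; [apply Rmax_r| auto].
    eapply Hmon; [apply Rmax_l| apply HP1; lia].
Qed.

Lemma as_mono {Omega} F (P : (Omega -> Prop) -> R) (Q Q' : Omega -> Prop) : almost_surely F P Q -> (forall w, Q w -> Q' w) -> almost_surely F P Q'.
Proof. intros [N [H1 [H2 H3]]] H. exists N. split; auto. Qed.

Lemma Cb {n m Omega} (f : vec n -> vec m -> vec n) (fbar : vec n -> vec n) (Xc : R -> vec n) (Y : nat -> Omega -> vec m)
  (SY : vec m -> Prop) (HYS : forall k w, SY (Y k w)) (M R0 Bf : R) (HM : 0 <= M)
  (HXc : forall t, 0 <= t <= M -> Dbox n R0 (Xc t))
  (Hfb : forall z y, Dbox n (R0 + 1) z -> SY y -> N1 n (vget (f z y)) <= Bf)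
  (Hfbb : forall z, Dbox n (R0 + 1) z -> N1 n (vget (fbar z)) <= Bf)
  (p : nat) (Hp : (0 < p)%nat) (eta : R) (Heta : 0 < eta) (w : Omega)
  (Hw : forall p i, vec_cv (fun N => vscal (/ INR (N + 1)) (vsum (fun k => f (cpt Xc p i) (Y (S k) w)) N)) (fbar (cpt Xc p i))) :
  exists C, 0 <= C /\ forall i N, INR i <= M * INR p -> N1 n (Gc f fbar Xc Y p i N w) <= C + eta * INR N.
Proof.
  assert (HpR : 0 < INR p) by (apply lt_0_INR; auto).
  destruct (fin_unif (fun i C => INR i <= M * INR p -> forall N, N1 n (Gc f fbar Xc Y p i N w) <= C + eta * INR N))
    with (I := floorn (M * INR p)) as [C [HC HCi]].
  - intros i C C' HCC' H Hi N. specialize (H Hi N). lra.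
  - intros i Hi. destruct (classic (INR i <= M * INR p)) as [HiM|HiM].
    + assert (HD : Dbox n (R0 + 1) (cpt Xc p i)).
      { apply Dbox_mono with R0. lra. apply HXc. split. apply Rdiv_le_0_compat; [apply pos_INR| auto].
        apply (Rmult_le_reg_r (INR p)); auto. unfold Rdiv. rewrite Rmult_assoc, Rinv_l, Rmult_1_r by lra. auto. }
      destruct (G_bound f fbar Y w SY (fun k => HYS k w) (cpt Xc p i) Bf (fun y Hy => Hfb _ y HD Hy) (Hfbb _ HD) (Hw p i) eta Heta)
        as [C [HC HC']].
      exists C. split; auto.
    + exists 0. split. lra. intros; contradiction.
  - exists C. split; auto. intros i N HiM. apply HCi; auto. apply floorn_le; auto. apply Rmult_le_pos; lra.
Qed.

Lemma small (n m : nat) (Omega : Type)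
  (F : (Omega -> Prop) -> Prop) (P : (Omega -> Prop) -> R)
  (HP : is_probability F P)
  (SY : vec m -> Prop) (Y : nat -> Omega -> vec m)
  (HYrv : forall k, random_vec F (Y k))
  (HYS : forall k w, SY (Y k w))
  (f : vec n -> vec m -> vec n) (x : vec n)
  (fbar : vec n -> vec n) (Xc : R -> vec n)
  (A1_cont : jointly_continuous f)
  (A1_bdd : forall z, exists B, forall y, SY y -> vnorm (f z y) <= B)
  (A1_lip : forall D : vec n -> Prop, is_compact D ->
     exists kD, forall x1 x2 y, D x1 -> D x2 -> SY y ->
       vnorm (vsub (f x1 y) (f x2 y)) <= kD * vnorm (vsub x1 x2))
  (A2 : forall z, almost_surely F P (fun w =>
     vec_cv (fun N => vscal (/ INR (N + 1)) (vsum (fun k => f z (Y (S k) w)) N))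
            (fbar z)))
  (A3_init : Xc 0 = x)
  (A3_ode : ode_solution_nonneg fbar Xc)
  (Hgood : almost_surely F P (fun w => forall p i, vec_cv (fun N => vscal (/ INR (N + 1)) (vsum (fun k => f (cpt Xc p i) (Y (S k) w)) N)) (fbar (cpt Xc p i))))
  (Mn : nat) (delta : R) (Hdelta : 0 < delta) (eta' : R) (Heta' : 0 < eta') :
  exists e, 0 < e /\ forall eps, 0 < eps < e ->
    P (fun w => exists t, 0 <= t <= INR Mn /\ vnorm (vsub (Xcont f Y eps x w t) (Xc t)) > delta) < eta'.
Proof.
  pose proof HP as [HF _].
  set (M := INR Mn). assert (HM : 0 <= M) by apply pos_INR.
  destruct (consts n m Omega F P HP SY Y HYS f fbar Xc A1_bdd A1_lip A2 A3_ode M HM)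
    as [R0 [L [Bf [HR0 [HL [HBf [HXc [Hfl [Hfbl [Hfb Hfbb]]]]]]]]]].
  destruct (core n m Omega SY Y HYS f x fbar Xc A3_ode A3_init M R0 L Bf HM HR0 HL HBf HXc Hfl Hfbl Hfb Hfbb (delta / 2) ltac:(lra))
    as [p [Hp [eta [Heta Hcore]]]].
  set (W := fun (j : nat) w => forall i N, INR i <= M * INR p -> N1 n (Gc f fbar Xc Y p i N w) <= INR j + eta * INR N).
  assert (HW : forall j, F (W j)).
  { intros j. unfold W. apply F_inter; auto. intros i. apply F_inter; auto. intros N. apply F_imp; auto. intros _.
    apply F_Gc_le; auto. }
  assert (Hinc : forall j w, W j w -> W (S j) w).
  { intros j w H i N Hi. specialize (H i N Hi). rewrite S_INR. lra. }
  assert (Has : almost_surely F P (fun w => exists j, W j w)).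
  { apply (as_mono F P _ _ Hgood). intros w Hw.
    destruct (Cb f fbar Xc Y SY HYS M R0 Bf HM HXc Hfb Hfbb p Hp eta Heta w Hw) as [C [HC HC']].
    exists (S (floorn C)). intros i N Hi. eapply Rle_trans. apply HC'; auto.
    destruct (floorn_spec C HC). rewrite S_INR. lra. }
  destruct (P_incr F P W HP HW Hinc Has eta' Heta') as [j0 Hj0].
  destruct (Hcore (INR j0) (pos_INR j0)) as [e1 [He1 He1']].
  exists e1. split; auto. intros eps Heps.
  eapply Rle_lt_trans; [|apply (Hj0 j0 (le_n _))].
  apply (P_mono F); auto. apply F_Ebad; auto. apply F_compl; auto.
  intros w [t [Ht Hd]] HWw. assert (H := He1' w HWw eps Heps t Ht). lra.
Qed.

Fixpoint etf (e : nat -> R) (k : nat) : R :=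
  match k with
  | O => Rmin (e O) 1
  | S k' => Rmin (etf e k') (Rmin (e (S k')) (/ INR (S (S k'))))
  end.

Fixpoint lastgood (et : nat -> R) (eps : R) (B : nat) : nat :=
  match B with
  | O => O
  | S B' => if Rlt_dec eps (et (S B')) then S B' else lastgood et eps B'
  end.

Lemma etf_pos e : (forall k, 0 < e k) -> forall k, 0 < etf e k.
Proof. intros He k. induction k; cbn [etf]. apply Rmin_pos; auto; lra. repeat apply Rmin_pos; auto. apply Rinv_0_lt_compat, lt_0_INR; lia. Qed.

Lemma etf_le_e e k : etf e k <= e k.
Proof. destruct k; cbn [etf]. apply Rmin_l. eapply Rle_trans; [apply Rmin_r| apply Rmin_l]. Qed.

Lemma etf_le_inv e k : etf e k <= / INR (S k).
Proof. destruct k; cbn [etf]. replace (/ INR 1) with 1 by (simpl; field). apply Rmin_r. eapply Rle_trans; [apply Rmin_r| apply Rmin_r]. Qed.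

Lemma etf_mono e k k' : (k <= k')%nat -> etf e k' <= etf e k.
Proof. intros H. induction H. lra. cbn [etf]. eapply Rle_trans; [apply Rmin_l| auto]. Qed.

Lemma lg1 et eps B : lastgood et eps B = O \/ eps < et (lastgood et eps B).
Proof. induction B; simpl; auto. destruct (Rlt_dec eps (et (S B))); auto. Qed.

Lemma lg2 et eps : (forall k k', (k <= k')%nat -> et k' <= et k) ->
  forall B N, (0 < N)%nat -> (N <= B)%nat -> eps < et N -> (N <= lastgood et eps B)%nat.
Proof.
  intros Hm B. induction B; intros N HN HNB Heps; [lia|]. simpl. destruct (Rlt_dec eps (et (S B))). auto.
  apply IHB; auto. destruct (Nat.eq_dec N (S B)). subst. contradiction. lia.
Qed.

Theorem theorem3
  (n m : nat) (Omega : Type)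
  (F : (Omega -> Prop) -> Prop) (P : (Omega -> Prop) -> R)
  (HP : is_probability F P) (HPc : is_complete F P)
  (eps0 : R) (Heps0 : 0 < eps0)
  (SY : vec m -> Prop) (Y : nat -> Omega -> vec m)
  (HYrv : forall k, random_vec F (Y k))
  (HYS : forall k w, SY (Y k w))
  (f : vec n -> vec m -> vec n) (x : vec n)
  (fbar : vec n -> vec n) (Xc : R -> vec n)
  (* (A1) *)
  (A1_cont : jointly_continuous f)
  (A1_bdd : forall z, exists B, forall y, SY y -> vnorm (f z y) <= B)
  (A1_lip : forall D : vec n -> Prop, is_compact D ->
     exists kD, forall x1 x2 y, D x1 -> D x2 -> SY y ->
       vnorm (vsub (f x1 y) (f x2 y)) <= kD * vnorm (vsub x1 x2))
  (* (A2) *)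
  (A2 : forall z, almost_surely F P (fun w =>
     vec_cv (fun N => vscal (/ INR (N + 1)) (vsum (fun k => f z (Y (S k) w)) N))
            (fbar z)))
  (* (A3) *)
  (A3_init : Xc 0 = x)
  (A3_ode : ode_solution_nonneg fbar Xc) :
  (* (i) *)
  (forall delta, 0 < delta ->
     almost_surely F P (fun w =>
       forall M, exists e1, 0 < e1 /\ forall eps, 0 < eps < e1 -> eps < eps0 ->
         exit_time_ge (fun t => vnorm (vsub (Xcont f Y eps x w t) (Xc t))) delta M))
  /\
  (* (ii) *)
  (exists T : R -> nat,
     (forall N : nat, exists e1, 0 < e1 /\ forall eps, 0 < eps < e1 -> eps < eps0 ->
        (N <= T eps)%nat) /\
     (forall delta, 0 < delta -> forall eta, 0 < eta ->
        exists e1, 0 < e1 /\ forall eps, 0 < eps < e1 -> eps < eps0 ->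
          Rabs (P (fun w => exists t, 0 <= t <= INR (T eps) /\
                  vnorm (vsub (Xcont f Y eps x w t) (Xc t)) > delta)) < eta)).
Proof.
  pose proof HP as [HF _].
  assert (Hgood : almost_surely F P (fun w => forall p i, vec_cv (fun N => vscal (/ INR (N + 1)) (vsum (fun k => f (cpt Xc p i) (Y (S k) w)) N)) (fbar (cpt Xc p i)))).
  { apply (as_forall F P (fun p w => forall i, vec_cv (fun N => vscal (/ INR (N + 1)) (vsum (fun k => f (cpt Xc p i) (Y (S k) w)) N)) (fbar (cpt Xc p i)))); auto.
    intros p. apply (as_forall F P (fun i w => vec_cv (fun N => vscal (/ INR (N + 1)) (vsum (fun k => f (cpt Xc p i) (Y (S k) w)) N)) (fbar (cpt Xc p i)))); auto. }
  split.
  - intros delta Hdelta. apply (as_mono F P _ _ Hgood). intros w Hw M.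
    set (M' := Rmax M 0). assert (HM' : 0 <= M') by apply Rmax_r.
    destruct (consts n m Omega F P HP SY Y HYS f fbar Xc A1_bdd A1_lip A2 A3_ode M' HM')
      as [R0 [L [Bf [HR0 [HL [HBf [HXc [Hfl [Hfbl [Hfb Hfbb]]]]]]]]]].
    destruct (core n m Omega SY Y HYS f x fbar Xc A3_ode A3_init M' R0 L Bf HM' HR0 HL HBf HXc Hfl Hfbl Hfb Hfbb delta Hdelta)
      as [p [Hp [eta [Heta Hcore]]]].
    destruct (Cb f fbar Xc Y SY HYS M' R0 Bf HM' HXc Hfb Hfbb p Hp eta Heta w Hw) as [C [HC HC']].
    destruct (Hcore C HC) as [e1 [He1 He1']]. exists e1. split; auto.
    intros eps Heps _ t Ht Hdev. destruct (Rle_dec M t) as [Hle|Hlt]; auto. exfalso.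
    assert (Ht' : 0 <= t <= M') by (split; auto; unfold M'; eapply Rle_trans; [|apply Rmax_l]; lra).
    assert (H := He1' w HC' eps Heps t Ht'). lra.
  - assert (Hsm : forall k : nat, exists e, 0 < e /\ forall eps, 0 < eps < e ->
      P (fun w => exists t, 0 <= t <= INR k /\ vnorm (vsub (Xcont f Y eps x w t) (Xc t)) > / INR (S k)) < / INR (S k)).
    { intros k. apply (small n m Omega F P HP SY Y HYrv HYS f x fbar Xc A1_cont A1_bdd A1_lip A2 A3_init A3_ode Hgood k);
      apply Rinv_0_lt_compat, lt_0_INR; lia. }
    destruct (choice _ Hsm) as [e He].
    assert (Hepos : forall k, 0 < e k) by (intros k; apply He).
    set (T := fun eps => lastgood (etf e) eps (floorn (/ eps))).
    assert (HT : forall N eps, 0 < eps < etf e (S N) -> (S N <= T eps)%nat).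
    { intros N eps Heps. unfold T. apply lg2. intros; apply etf_mono; auto. lia.
      - apply floorn_le. left; apply Rinv_0_lt_compat; lra.
        assert (H1 := etf_le_inv e (S N)).
        assert (H2 : eps < / INR (S (S N))) by lra.
        assert (H3 : 0 < INR (S (S N))) by (apply lt_0_INR; lia).
        assert (H4 : INR (S (S N)) < / eps).
        { apply (Rmult_lt_reg_r eps). lra. rewrite Rinv_l by lra.
          apply (Rmult_lt_compat_l (INR (S (S N)))) in H2; auto. rewrite Rinv_r in H2 by lra. lra. }
        rewrite S_INR in H4. lra.
      - lra. }
    exists T. split.
    + intros N. exists (etf e (S N)). split. apply etf_pos; auto. intros eps Heps _.
      assert (H := HT N eps Heps). lia.
    + intros delta Hdelta eta Heta.
      destruct (archimed_cor1 (Rmin delta eta)) as [N0 [HN0 HN0p]]. apply Rmin_pos; auto.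
      exists (etf e (S N0)). split. apply etf_pos; auto. intros eps Heps _.
      assert (HTk := HT N0 eps Heps).
      set (Tk := T eps) in *.
      assert (HeT : eps < e Tk).
      { destruct (lg1 (etf e) eps (floorn (/ eps))) as [H0|H0]. fold (T eps) in H0. fold Tk in H0. lia.
        fold (T eps) in H0. fold Tk in H0. eapply Rlt_le_trans; [apply H0| apply etf_le_e]. }
      assert (Hb := proj2 (He Tk) eps (conj (proj1 Heps) HeT)).
      assert (Hinv : / INR (S Tk) <= / INR N0).
      { apply Rinv_le_contravar. apply lt_0_INR; auto. apply le_INR. lia. }
      assert (Hd : / INR (S Tk) < delta) by (assert (H := Rmin_l delta eta); lra).
      assert (Hh : / INR (S Tk) < eta) by (assert (H := Rmin_r delta eta); lra).
      assert (HFE : F (fun w => exists t, 0 <= t <= INR Tk /\ vnorm (vsub (Xcont f Y eps x w t) (Xc t)) > delta)) by (apply F_Ebad; auto).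
      rewrite Rabs_right by (apply Rle_ge, (P_nonneg F); auto).
      eapply Rle_lt_trans; [|apply Hh]. eapply Rle_trans; [|left; apply Hb].
      apply (P_mono F); auto. apply F_Ebad; auto.
      intros w [t [Ht Hdv]]. exists t. split; auto. lra.
Qed.
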